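(* In the Setting below, the subalgebra $N_{\mathcal M}$ of $\mathcal M$ is a Lie algebra.
   Context: Setting. Let $\mathbb F$ be a field of characteristic different from $2$ and $3$. A Malcev algebra is an anticommutative algebra $\mathcal M$ over $\mathbb F$ satisfying $(xz)(yt)=((xy)z)t+((yz)t)x+((zt)x)y+((tx)y)z$. Products are left-normed: $xyz=(xy)z$, $xyzt=((xy)z)t$. Put $J(x,y,z)=xyz+yzx+zxy$ (the Jacobian), $\{x,y,z\}=xyz-xzy+2x(yz)$, and $h(y,z,t,x,u)=\{yz,t,u\}x+\{yz,t,x\}u+\{yx,z,u\}t+\{yu,z,x\}t$. The variety $\mathcal H$ consists of the Malcev algebras satisfying $h(y,z,t,x,u)=0$ identically. Let $L=\mathfrak{sl}_2(\mathbb F)$ with basis $E,H,F$ and products $EH=E$, $FH=-F$, $EF=\tfrac12 H$. Standing assumption: $\mathcal M\in\mathcal H$ contains $L$ as a subalgebra and $mL\neq 0$ for every $0\neq m\in\mathcal M$. Define $N_{\mathcal M}=\{m\in\mathcal M: J(m,a,b)=0\ \forall a,b\in L\}$ (a subalgebra of $\mathcal M$). *)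

(* Defs.v *)
From mathcomp Require Import all_boot all_order all_algebra.
Set Implicit Arguments. Unset Strict Implicit. Unset Printing Implicit Defensive.
Import GRing.Theory.
Local Open Scope ring_scope.

(* An algebra over the field F: an F-vector space M (lmodType F) together with
   a bilinear product [mul]. Products are left-normed in the paper. *)
Section Malcev.
Variables (F : fieldType) (M : lmodType F) (mul : M -> M -> M).

Definition bilinear_prod : Prop :=
  (forall (a : F) (x y z : M), mul (a *: x + y) z = a *: mul x z + mul y z) /\
  (forall (a : F) (x y z : M), mul z (a *: x + y) = a *: mul z x + mul z y).

Definition anticomm : Prop := forall x : M, mul x x = 0.

Definition malcev_identity : Prop :=
  forall x y z t : M,
    mul (mul x z) (mul y t) =
      mul (mul (mul x y) z) t + mul (mul (mul y z) t) x
      + mul (mul (mul z t) x) y + mul (mul (mul t x) y) z.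

Definition is_malcev : Prop := [/\ bilinear_prod, anticomm & malcev_identity].

Definition jacobian (x y z : M) : M :=
  mul (mul x y) z + mul (mul y z) x + mul (mul z x) y.

Definition brace (x y z : M) : M :=
  mul (mul x y) z - mul (mul x z) y + 2%:R *: mul x (mul y z).

Definition hpoly (y z t x u : M) : M :=
  mul (brace (mul y z) t u) x + mul (brace (mul y z) t x) u
  + mul (brace (mul y x) z u) t + mul (brace (mul y u) z x) t.

Definition in_variety_H : Prop :=
  is_malcev /\ forall y z t x u : M, hpoly y z t x u = 0.

Definition in_span3 (e h f m : M) : Prop :=
  exists a b c : F, m = a *: e + b *: h + c *: f.

(* e, h, f span a copy of sl_2(F) inside M: they are linearly independent and
   satisfy EH = E, FH = -F, EF = H/2 (then span3 is a subalgebra isomorphic to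
   sl_2 by bilinearity/anticommutativity). *)
Definition sl2_triple (e h f : M) : Prop :=
  [/\ (forall a b c : F, a *: e + b *: h + c *: f = 0 -> [/\ a = 0, b = 0 & c = 0]),
      mul e h = e, mul f h = - f & mul e f = 2%:R^-1 *: h].

Definition N_M (e h f m : M) : Prop :=
  forall a b : M, in_span3 e h f a -> in_span3 e h f b -> jacobian m a b = 0.

End Malcev.

(* Main.v *)
Require Import Defs.
From mathcomp Require Import all_boot all_order all_algebra.
Set Implicit Arguments. Unset Strict Implicit. Unset Printing Implicit Defensive.
Import GRing.Theory.
Local Open Scope ring_scope.

Lemma mulDl (F : fieldType) (M : lmodType F) (mul : M -> M -> M) :
  bilinear_prod mul -> forall x y z, mul (x + y) z = mul x z + mul y z.
Proof. by move=> hb x y z; have := hb.1 1 x y z; rewrite !scale1r. Qed.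
Lemma mulDr (F : fieldType) (M : lmodType F) (mul : M -> M -> M) :
  bilinear_prod mul -> forall x y z, mul z (x + y) = mul z x + mul z y.
Proof. by move=> hb x y z; have := hb.2 1 x y z; rewrite !scale1r. Qed.
Lemma mulZl (F : fieldType) (M : lmodType F) (mul : M -> M -> M) :
  bilinear_prod mul -> forall a x z, mul (a *: x) z = a *: mul x z.
Proof.
move=> hb a x z; have := hb.1 a x 0 z; rewrite addr0 => ->.
have H := mulDl hb 0 0 z; rewrite addr0 in H.
have -> : mul 0 z = 0 by apply: (addrI (mul 0 z)); rewrite addr0 -H.
by rewrite addr0.
Qed.
Lemma mulZr (F : fieldType) (M : lmodType F) (mul : M -> M -> M) :
  bilinear_prod mul -> forall a x z, mul z (a *: x) = a *: mul z x.
Proof.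
move=> hb a x z; have := hb.2 a x 0 z; rewrite addr0 => ->.
have H := mulDr hb 0 0 z; rewrite addr0 in H.
have -> : mul z 0 = 0 by apply: (addrI (mul z 0)); rewrite addr0 -H.
by rewrite addr0.
Qed.
Lemma mul0l (F : fieldType) (M : lmodType F) (mul : M -> M -> M) :
  bilinear_prod mul -> forall z, mul 0 z = 0.
Proof. by move=> hb z; have := mulZl hb 0 0 z; rewrite !scale0r. Qed.
Lemma mul0r (F : fieldType) (M : lmodType F) (mul : M -> M -> M) :
  bilinear_prod mul -> forall z, mul z 0 = 0.
Proof. by move=> hb z; have := mulZr hb 0 0 z; rewrite !scale0r. Qed.
Lemma mulzl (F : fieldType) (M : lmodType F) (mul : M -> M -> M) :
  bilinear_prod mul -> forall (c : int) (x z : M), mul (x *~ c) z = mul x z *~ c.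
Proof. by move=> hb c x z; rewrite -scaler_int mulZl // scaler_int. Qed.
Lemma mulzr (F : fieldType) (M : lmodType F) (mul : M -> M -> M) :
  bilinear_prod mul -> forall (c : int) (x z : M), mul z (x *~ c) = mul z x *~ c.
Proof. by move=> hb c x z; rewrite -scaler_int mulZr // scaler_int. Qed.
Lemma mulC_anti (F : fieldType) (M : lmodType F) (mul : M -> M -> M) :
  bilinear_prod mul -> anticomm mul -> forall x y, mul x y = - mul y x.
Proof.
move=> hb ha x y; have H := ha (x + y).
rewrite (mulDl hb) (mulDr hb x y x) (mulDr hb x y y) (ha x) (ha y) add0r addr0 in H.
by apply/eqP; rewrite -addr_eq0; apply/eqP.
Qed.

Inductive tm := V of nat | Mu of tm & tm.
Fixpoint tm_eqb (a b : tm) : bool :=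
  match a, b with
  | V i, V j => eqn i j
  | Mu a1 a2, Mu b1 b2 => tm_eqb a1 b1 && tm_eqb a2 b2
  | _, _ => false
  end.
Lemma tm_eqbP a b : tm_eqb a b -> a = b.
Proof.
elim: a b => [i|a1 IH1 a2 IH2] [j|b1 b2] //=.
  by move/eqP => ->.
by case/andP => /IH1 -> /IH2 ->.
Qed.
Fixpoint tm_lt (a b : tm) : bool :=
  match a, b with
  | V i, V j => (i < j)%N
  | V _, Mu _ _ => true
  | Mu _ _, V _ => false
  | Mu a1 a2, Mu b1 b2 => if tm_eqb a1 b1 then tm_lt a2 b2 else tm_lt a1 b1
  end.

Definition isL (i : nat) : bool := (2 < i)%N && (i < 6)%N.

Definition tbl (i j : nat) : option (int * tm) :=
  match i, j with
  | 3, 4 => Some (1, V 3) | 4, 3 => Some (-1, V 3)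
  | 5, 4 => Some (-1, V 5) | 4, 5 => Some (1, V 5)
  | 3, 5 => Some (1, V 4) | 5, 3 => Some (-1, V 4)
  | _, _ => None
  end.

Definition gen (a b : tm) : option (int * tm) :=
  if tm_eqb a b then None else if tm_lt a b then Some (1, Mu a b) else Some (-1, Mu b a).

Definition nmul (a b : tm) : option (int * tm) :=
  match a, b with
  | V i, V j => if isL i && isL j then tbl i j else gen a b
  | _, _ => gen a b
  end.

Definition scl (k : int) (o : option (int * tm)) :=
  match o with None => None | Some (c, t) => Some (k * c, t) end.

Fixpoint nm (t : tm) : option (int * tm) :=
  match t with
  | V n => Some (1, V n)
  | Mu a b =>
    match nm a, nm b with
    | Some (c, a'), Some (d, b') => scl (c * d) (nmul a' b')
    | _, _ => None
    end
  end.

Definition poly := seq (int * tm).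
Fixpoint nmp (p : poly) : poly :=
  match p with
  | [::] => [::]
  | (c, t) :: q => match nm t with Some (d, u) => (c * d, u) :: nmp q | None => nmp q end
  end.
Fixpoint ins (ct : int * tm) (l : poly) : poly :=
  match l with
  | [::] => [:: ct]
  | (d, u) :: l' => if tm_eqb ct.2 u then (ct.1 + d, u) :: l' else (d, u) :: ins ct l'
  end.
Fixpoint coll (p acc : poly) : poly :=
  match p with [::] => acc | ct :: q => coll q (ins ct acc) end.
Definition allz (l : poly) : bool := all (fun ct => ct.1 == 0) l.

Inductive zp := ZMal of tm & tm & tm & tm | ZN of nat & nat & nat | ZR of zp & tm.
Fixpoint topoly (z : zp) : poly :=
  match z with
  | ZMal a b c d => [:: (1, Mu (Mu a c) (Mu b d)); (-1, Mu (Mu (Mu a b) c) d);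
                        (-1, Mu (Mu (Mu b c) d) a); (-1, Mu (Mu (Mu c d) a) b);
                        (-1, Mu (Mu (Mu d a) b) c)]
  | ZN i j k => [:: (1, Mu (Mu (V i) (V j)) (V k)); (1, Mu (Mu (V j) (V k)) (V i));
                    (1, Mu (Mu (V k) (V i)) (V j))]
  | ZR z t => map (fun ct => (ct.1, Mu ct.2 t)) (topoly z)
  end.
Fixpoint validz (z : zp) : bool :=
  match z with
  | ZMal _ _ _ _ => true
  | ZN i j k => (i < 3)%N && isL j && isL k
  | ZR z _ => validz z
  end.
Definition sclp (k : int) (p : poly) : poly := map (fun ct => (k * ct.1, ct.2)) p.
Definition total (C : seq (int * zp)) (tgt : poly) : poly :=
  flatten (map (fun cz => sclp cz.1 (topoly cz.2)) C) ++ tgt.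
Definition check (C : seq (int * zp)) (tgt : poly) : bool :=
  all (fun cz => validz cz.2) C && allz (coll (nmp (total C tgt)) [::]).

Fixpoint ev (F : fieldType) (M : lmodType F) (mul : M -> M -> M) (env : nat -> M) (t : tm) : M :=
  match t with V n => env n | Mu a b => mul (ev mul env a) (ev mul env b) end.
Definition evo (F : fieldType) (M : lmodType F) (mul : M -> M -> M) (env : nat -> M)
  (o : option (int * tm)) : M :=
  match o with None => 0 | Some (c, t) => ev mul env t *~ c end.
Definition evp (F : fieldType) (M : lmodType F) (mul : M -> M -> M) (env : nat -> M)
  (p : poly) : M := \sum_(ct <- p) ev mul env ct.2 *~ ct.1.

Lemma scl_ok (F : fieldType) (M : lmodType F) (mul : M -> M -> M) env k o :
  evo mul env (scl k o) = evo mul env o *~ k.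
Proof. by case: o => [[c t]|] //=; rewrite ?mul0rz // mulrzA mulrzAC. Qed.

Lemma gen_ok (F : fieldType) (M : lmodType F) (mul : M -> M -> M) env :
  bilinear_prod mul -> anticomm mul ->
  forall a b, evo mul env (gen a b) = mul (ev mul env a) (ev mul env b).
Proof.
move=> hb ha a b; rewrite /gen.
case E: (tm_eqb a b); first by rewrite (tm_eqbP E) /= ha.
case: (tm_lt a b) => /=; first by rewrite mulr1z.
by rewrite (mulC_anti hb ha (ev mul env a)) mulrN1z.
Qed.

Definition tblH (F : fieldType) (M : lmodType F) (mul : M -> M -> M) env :=
  forall i j, isL i -> isL j -> evo mul env (tbl i j) = mul (env i) (env j).

Lemma nmul_ok (F : fieldType) (M : lmodType F) (mul : M -> M -> M) env :
  bilinear_prod mul -> anticomm mul -> tblH mul env ->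
  forall a b, evo mul env (nmul a b) = mul (ev mul env a) (ev mul env b).
Proof.
move=> hb ha ht [i|a1 a2] [j|b1 b2]; rewrite /nmul; try exact: gen_ok.
case E: (isL i && isL j); last exact: gen_ok.
by case/andP: E => Hi Hj; apply: ht.
Qed.

Lemma nm_ok (F : fieldType) (M : lmodType F) (mul : M -> M -> M) env :
  bilinear_prod mul -> anticomm mul -> tblH mul env ->
  forall t, evo mul env (nm t) = ev mul env t.
Proof.
move=> hb ha ht; elim=> [n|a IHa b IHb] /=; first by rewrite mulr1z.
have H0l := mul0l hb; have H0r := mul0r hb.
case: (nm a) IHa => [[c a']|] /= IHa; last by rewrite -IHa H0l.
case: (nm b) IHb => [[d b']|] /= IHb; last by rewrite -IHb H0r.
by rewrite scl_ok (nmul_ok hb ha ht) -IHa -IHb (mulzl hb) (mulzr hb) mulrzA mulrzAC.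
Qed.

Lemma evp_cons (F : fieldType) (M : lmodType F) (mul : M -> M -> M) env ct p :
  evp mul env (ct :: p) = ev mul env ct.2 *~ ct.1 + evp mul env p.
Proof. by rewrite /evp big_cons. Qed.
Lemma evp_cat (F : fieldType) (M : lmodType F) (mul : M -> M -> M) env p q :
  evp mul env (p ++ q) = evp mul env p + evp mul env q.
Proof. by rewrite /evp big_cat. Qed.

Lemma nmp_ok (F : fieldType) (M : lmodType F) (mul : M -> M -> M) env :
  bilinear_prod mul -> anticomm mul -> tblH mul env ->
  forall p, evp mul env (nmp p) = evp mul env p.
Proof.
move=> hb ha ht; elim=> [|[c t] p IH] //=.
rewrite evp_cons /= -(nm_ok hb ha ht t).
case: (nm t) => [[d u]|] /=.
  by rewrite !evp_cons IH /= mulrzA mulrzAC.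
by rewrite IH mul0rz add0r.
Qed.

Lemma ins_ok (F : fieldType) (M : lmodType F) (mul : M -> M -> M) env ct l :
  evp mul env (ins ct l) = ev mul env ct.2 *~ ct.1 + evp mul env l.
Proof.
elim: l => [|[d u] l IH] /=; first by rewrite evp_cons /evp big_nil.
case E: (tm_eqb ct.2 u).
  by rewrite !evp_cons /= (tm_eqbP E) mulrzDr addrA.
by rewrite !evp_cons IH /= addrCA.
Qed.

Lemma coll_ok (F : fieldType) (M : lmodType F) (mul : M -> M -> M) env p acc :
  evp mul env (coll p acc) = evp mul env p + evp mul env acc.
Proof.
elim: p acc => [|ct p IH] acc /=; first by rewrite /evp big_nil add0r.
by rewrite IH ins_ok evp_cons addrA (addrC (evp mul env p)).
Qed.

Lemma allz_ok (F : fieldType) (M : lmodType F) (mul : M -> M -> M) env l :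
  allz l -> evp mul env l = 0.
Proof.
elim: l => [|[c t] l IH] /=; first by rewrite /evp big_nil.
by case/andP => /eqP -> /IH; rewrite evp_cons /= mulr0z add0r.
Qed.

Lemma evp_sclp (F : fieldType) (M : lmodType F) (mul : M -> M -> M) env k p :
  evp mul env (sclp k p) = evp mul env p *~ k.
Proof.
elim: p => [|[c t] p IH] /=; first by rewrite /evp !big_nil mul0rz.
by rewrite !evp_cons IH /= mulrzDl mulrzA mulrzAC.
Qed.

Lemma evp_mapR (F : fieldType) (M : lmodType F) (mul : M -> M -> M) env :
  bilinear_prod mul -> forall t p,
  evp mul env (map (fun ct => (ct.1, Mu ct.2 t)) p) = mul (evp mul env p) (ev mul env t).
Proof.
move=> hb t; elim=> [|[c u] p IH] /=.
  by rewrite /evp !big_nil mul0l.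
by rewrite !evp_cons IH /= (mulDl hb) (mulzl hb).
Qed.

Definition NH (F : fieldType) (M : lmodType F) (mul : M -> M -> M) env :=
  forall i j k, (i < 3)%N -> isL j -> isL k -> jacobian mul (env i) (env j) (env k) = 0.

Lemma topoly_ok (F : fieldType) (M : lmodType F) (mul : M -> M -> M) env :
  bilinear_prod mul -> malcev_identity mul -> NH mul env ->
  forall z, validz z -> evp mul env (topoly z) = 0.
Proof.
move=> hb hm hn; elim=> [a b c d|i j k|z IH t] /=.
- move=> _; rewrite /evp !big_cons big_nil /= mulr1z !mulrN1z addr0 hm.
  by rewrite -!opprD !addrA subrr.
- case/andP => /andP [Hi Hj] Hk; rewrite /evp !big_cons big_nil /= !mulr1z addr0 addrA.
  exact: hn.
- move=> /IH; rewrite evp_mapR // => ->.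
  by rewrite mul0l.
Qed.

Lemma check_ok (F : fieldType) (M : lmodType F) (mul : M -> M -> M) env :
  bilinear_prod mul -> anticomm mul -> malcev_identity mul -> tblH mul env -> NH mul env ->
  forall C tgt, check C tgt -> evp mul env tgt = 0.
Proof.
move=> hb ha hm ht hn C tgt /andP [HC Hz].
have := allz_ok mul env Hz; rewrite coll_ok (nmp_ok hb ha ht).
have -> : evp mul env [::] = 0 by rewrite /evp big_nil.
rewrite addr0 /total evp_cat.
have -> : evp mul env (flatten [seq sclp cz.1 (topoly cz.2) | cz <- C]) = 0.
  clear Hz; elim: C HC => [|[c z] C IH] /=; first by rewrite /evp big_nil.
  case/andP => Hv /IH; rewrite evp_cat evp_sclp (topoly_ok hb hm hn Hv) mul0rz add0r.
  by [].
by rewrite add0r.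
Qed.

Definition certE : seq (int * zp) := [::
  ((Negz 11), (ZMal (V 0) (V 1) (V 2) (V 3)));
  ((Negz 3), (ZMal (V 0) (V 2) (V 1) (V 3)));
  ((Posz 20), (ZMal (V 0) (V 3) (V 1) (V 2)));
  ((Posz 12), (ZMal (V 0) (V 2) (V 3) (V 1)));
  ((Negz 3), (ZMal (Mu (V 0) (V 1)) (V 2) (V 3) (V 4)));
  ((Negz 9), (ZMal (Mu (V 0) (V 1)) (V 3) (V 2) (V 4)));
  ((Posz 6), (ZMal (Mu (V 0) (V 1)) (V 4) (V 2) (V 3)));
  ((Negz 3), (ZMal (Mu (V 0) (V 1)) (V 3) (V 4) (V 2)));
  ((Negz 7), (ZMal (V 0) (Mu (V 1) (V 2)) (V 3) (V 4)));
  ((Negz 23), (ZMal (V 0) (V 1) (Mu (V 3) (V 2)) (V 4)));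
  ((Posz 24), (ZMal (V 0) (V 1) (Mu (V 4) (V 2)) (V 3)));
  ((Negz 11), (ZMal (V 0) (Mu (V 3) (V 1)) (V 2) (V 4)));
  ((Posz 12), (ZMal (V 0) (Mu (V 4) (V 1)) (V 2) (V 3)));
  ((Posz 35), (ZMal (Mu (V 3) (V 0)) (V 1) (V 2) (V 4)));
  ((Negz 34), (ZMal (Mu (V 4) (V 0)) (V 1) (V 2) (V 3)));
  ((Posz 28), (ZMal (V 0) (V 1) (V 3) (Mu (V 4) (V 2))));
  ((Negz 27), (ZMal (V 0) (V 1) (V 4) (Mu (V 3) (V 2))));
  ((Posz 14), (ZMal (V 0) (Mu (V 3) (V 1)) (V 4) (V 2)));
  ((Negz 13), (ZMal (V 0) (Mu (V 4) (V 1)) (V 3) (V 2)));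
  ((Posz 13), (ZMal (Mu (V 3) (V 0)) (V 1) (V 4) (V 2)));
  ((Negz 8), (ZMal (Mu (V 4) (V 0)) (V 1) (V 3) (V 2)));
  ((Negz 5), (ZMal (Mu (V 0) (V 2)) (V 3) (V 1) (V 4)));
  ((Posz 6), (ZMal (Mu (V 0) (V 2)) (V 4) (V 1) (V 3)));
  ((Posz 2), (ZMal (V 0) (V 2) (Mu (V 3) (V 1)) (V 4)));
  ((Negz 1), (ZMal (V 0) (V 2) (Mu (V 4) (V 1)) (V 3)));
  ((Negz 37), (ZMal (V 0) (Mu (V 3) (V 2)) (V 1) (V 4)));
  ((Posz 38), (ZMal (V 0) (Mu (V 4) (V 2)) (V 1) (V 3)));
  ((Posz 28), (ZMal (Mu (V 3) (V 0)) (V 2) (V 1) (V 4)));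
  ((Negz 23), (ZMal (Mu (V 4) (V 0)) (V 2) (V 1) (V 3)));
  ((Negz 17), (ZMal (V 0) (V 3) (Mu (V 1) (V 2)) (V 4)));
  ((Posz 10), (ZMal (V 0) (V 4) (Mu (V 1) (V 2)) (V 3)));
  ((Posz 14), (ZMal (V 0) (V 3) (V 1) (Mu (V 4) (V 2))));
  ((Negz 13), (ZMal (V 0) (V 4) (V 1) (Mu (V 3) (V 2))));
  ((Posz 6), (ZMal (V 0) (V 3) (Mu (V 4) (V 1)) (V 2)));
  ((Negz 5), (ZMal (V 0) (V 4) (Mu (V 3) (V 1)) (V 2)));
  ((Posz 23), (ZMal (Mu (V 3) (V 0)) (V 4) (V 1) (V 2)));
  ((Negz 22), (ZMal (Mu (V 4) (V 0)) (V 3) (V 1) (V 2)));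
  ((Posz 2), (ZMal (V 0) (V 2) (V 3) (Mu (V 4) (V 1))));
  ((Negz 1), (ZMal (V 0) (V 2) (V 4) (Mu (V 3) (V 1))));
  ((Negz 7), (ZMal (V 0) (Mu (V 3) (V 2)) (V 4) (V 1)));
  ((Posz 8), (ZMal (V 0) (Mu (V 4) (V 2)) (V 3) (V 1)));
  ((Posz 30), (ZMal (Mu (V 3) (V 0)) (V 2) (V 4) (V 1)));
  ((Negz 29), (ZMal (Mu (V 4) (V 0)) (V 2) (V 3) (V 1)));
  ((Negz 7), (ZMal (V 0) (V 3) (V 4) (Mu (V 1) (V 2))));
  ((Negz 43), (ZR (ZN 0 3 4) (Mu (V 1) (V 2))));
  ((Posz 24), (ZR (ZN 1 3 4) (Mu (V 0) (V 2))));
  ((Posz 40), (ZR (ZN 2 3 4) (Mu (V 0) (V 1))));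
  ((Posz 24), (ZR (ZMal (V 0) (V 1) (V 3) (V 4)) (V 2)));
  ((Negz 19), (ZR (ZMal (V 0) (V 1) (V 4) (V 3)) (V 2)));
  ((Posz 4), (ZR (ZMal (V 0) (V 3) (V 1) (V 4)) (V 2)));
  ((Posz 4), (ZR (ZMal (V 0) (V 3) (V 4) (V 1)) (V 2)));
  ((Posz 20), (ZR (ZR (ZN 0 3 4) (V 1)) (V 2)));
  ((Posz 20), (ZR (ZR (ZN 1 3 4) (V 0)) (V 2)));
  ((Posz 12), (ZR (ZMal (V 0) (V 2) (V 3) (V 4)) (V 1)));
  ((Negz 11), (ZR (ZMal (V 0) (V 2) (V 4) (V 3)) (V 1)));
  ((Negz 3), (ZR (ZMal (V 0) (V 3) (V 2) (V 4)) (V 1)));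
  ((Posz 4), (ZR (ZMal (V 0) (V 4) (V 2) (V 3)) (V 1)));
  ((Posz 24), (ZR (ZR (ZN 0 3 4) (V 2)) (V 1)));
  ((Posz 12), (ZR (ZR (ZN 2 3 4) (V 0)) (V 1)));
  ((Negz 19), (ZR (ZMal (V 1) (V 2) (V 3) (V 4)) (V 0)));
  ((Posz 20), (ZR (ZMal (V 1) (V 2) (V 4) (V 3)) (V 0)));
  ((Negz 19), (ZR (ZR (ZN 1 3 4) (V 2)) (V 0)));
  ((Negz 11), (ZR (ZR (ZN 2 3 4) (V 1)) (V 0)));
  ((Negz 9), (ZMal (Mu (V 3) (Mu (V 0) (V 1))) (V 2) (V 3) (V 5)));
  ((Posz 10), (ZMal (Mu (V 4) (Mu (V 0) (V 1))) (V 2) (V 3) (V 4)));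
  ((Posz 10), (ZMal (Mu (V 0) (Mu (V 3) (V 1))) (V 2) (V 3) (V 5)));
  ((Negz 9), (ZMal (Mu (V 0) (Mu (V 4) (V 1))) (V 2) (V 3) (V 4)));
  ((Posz 5), (ZMal (Mu (V 1) (Mu (V 3) (V 0))) (V 2) (V 3) (V 5)));
  ((Negz 4), (ZMal (Mu (V 1) (Mu (V 4) (V 0))) (V 2) (V 3) (V 4)));
  ((Negz 9), (ZMal (Mu (V 0) (V 1)) (V 3) (Mu (V 3) (V 2)) (V 5)));
  ((Posz 10), (ZMal (Mu (V 0) (V 1)) (V 3) (Mu (V 5) (V 2)) (V 3)));
  ((Posz 10), (ZMal (Mu (V 0) (V 1)) (V 4) (Mu (V 3) (V 2)) (V 4)));
  ((Negz 9), (ZMal (Mu (V 0) (V 1)) (V 4) (Mu (V 4) (V 2)) (V 3)));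
  ((Negz 9), (ZMal (Mu (V 3) (Mu (V 0) (V 1))) (V 5) (V 2) (V 3)));
  ((Posz 10), (ZMal (Mu (V 4) (Mu (V 0) (V 1))) (V 4) (V 2) (V 3)));
  ((Posz 10), (ZMal (Mu (V 0) (Mu (V 3) (V 1))) (V 5) (V 2) (V 3)));
  ((Negz 9), (ZMal (Mu (V 0) (Mu (V 4) (V 1))) (V 4) (V 2) (V 3)));
  ((Posz 5), (ZMal (Mu (V 1) (Mu (V 3) (V 0))) (V 5) (V 2) (V 3)));
  ((Negz 4), (ZMal (Mu (V 1) (Mu (V 4) (V 0))) (V 4) (V 2) (V 3)));
  ((Negz 9), (ZMal (Mu (V 3) (Mu (V 0) (V 1))) (V 3) (V 5) (V 2)));
  ((Posz 10), (ZMal (Mu (V 4) (Mu (V 0) (V 1))) (V 3) (V 4) (V 2)));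
  ((Posz 10), (ZMal (Mu (V 0) (Mu (V 3) (V 1))) (V 3) (V 5) (V 2)));
  ((Negz 9), (ZMal (Mu (V 0) (Mu (V 4) (V 1))) (V 3) (V 4) (V 2)));
  ((Posz 5), (ZMal (Mu (V 1) (Mu (V 3) (V 0))) (V 3) (V 5) (V 2)));
  ((Negz 4), (ZMal (Mu (V 1) (Mu (V 4) (V 0))) (V 3) (V 4) (V 2)));
  ((Negz 5), (ZMal (Mu (V 3) (Mu (V 0) (V 2))) (V 1) (V 3) (V 5)));
  ((Posz 6), (ZMal (Mu (V 4) (Mu (V 0) (V 2))) (V 1) (V 3) (V 4)));
  ((Posz 10), (ZMal (Mu (V 0) (Mu (V 3) (V 2))) (V 1) (V 3) (V 5)));
  ((Negz 9), (ZMal (Mu (V 0) (Mu (V 4) (V 2))) (V 1) (V 3) (V 4)));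
  ((Posz 15), (ZMal (Mu (V 2) (Mu (V 3) (V 0))) (V 1) (V 3) (V 5)));
  ((Negz 14), (ZMal (Mu (V 2) (Mu (V 4) (V 0))) (V 1) (V 3) (V 4)));
  ((Posz 10), (ZMal (V 0) (Mu (V 3) (Mu (V 1) (V 2))) (V 3) (V 5)));
  ((Negz 9), (ZMal (V 0) (Mu (V 4) (Mu (V 1) (V 2))) (V 3) (V 4)));
  ((Posz 14), (ZMal (V 0) (Mu (V 1) (Mu (V 3) (V 2))) (V 3) (V 5)));
  ((Negz 13), (ZMal (V 0) (Mu (V 1) (Mu (V 4) (V 2))) (V 3) (V 4)));
  ((Negz 5), (ZMal (V 0) (Mu (V 2) (Mu (V 3) (V 1))) (V 3) (V 5)));
  ((Posz 6), (ZMal (V 0) (Mu (V 2) (Mu (V 4) (V 1))) (V 3) (V 4)));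
  ((Posz 5), (ZMal (Mu (V 3) (V 0)) (Mu (V 1) (V 2)) (V 3) (V 5)));
  ((Negz 4), (ZMal (Mu (V 4) (V 0)) (Mu (V 1) (V 2)) (V 3) (V 4)));
  ((Negz 9), (ZMal (V 0) (V 1) (Mu (V 3) (Mu (V 5) (V 2))) (V 3)));
  ((Posz 10), (ZMal (V 0) (V 1) (Mu (V 3) (Mu (V 4) (V 2))) (V 4)));
  ((Posz 10), (ZMal (V 0) (V 1) (Mu (V 5) (Mu (V 3) (V 2))) (V 3)));
  ((Negz 9), (ZMal (V 0) (V 1) (Mu (V 4) (Mu (V 3) (V 2))) (V 4)));
  ((Negz 5), (ZMal (V 0) (Mu (V 3) (Mu (V 5) (V 1))) (V 2) (V 3)));
  ((Posz 6), (ZMal (V 0) (Mu (V 3) (Mu (V 4) (V 1))) (V 2) (V 4)));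
  ((Posz 6), (ZMal (V 0) (Mu (V 5) (Mu (V 3) (V 1))) (V 2) (V 3)));
  ((Negz 5), (ZMal (V 0) (Mu (V 4) (Mu (V 3) (V 1))) (V 2) (V 4)));
  ((Posz 5), (ZMal (Mu (V 3) (V 0)) (V 1) (Mu (V 3) (V 2)) (V 5)));
  ((Negz 4), (ZMal (Mu (V 3) (V 0)) (V 1) (Mu (V 5) (V 2)) (V 3)));
  ((Negz 4), (ZMal (Mu (V 4) (V 0)) (V 1) (Mu (V 3) (V 2)) (V 4)));
  ((Posz 5), (ZMal (Mu (V 4) (V 0)) (V 1) (Mu (V 4) (V 2)) (V 3)));
  ((Negz 4), (ZMal (Mu (V 3) (V 0)) (Mu (V 3) (V 1)) (V 2) (V 5)));
  ((Posz 5), (ZMal (Mu (V 3) (V 0)) (Mu (V 5) (V 1)) (V 2) (V 3)));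
  ((Posz 5), (ZMal (Mu (V 4) (V 0)) (Mu (V 3) (V 1)) (V 2) (V 4)));
  ((Negz 4), (ZMal (Mu (V 4) (V 0)) (Mu (V 4) (V 1)) (V 2) (V 3)));
  ((Negz 4), (ZMal (Mu (V 3) (Mu (V 3) (V 0))) (V 1) (V 2) (V 5)));
  ((Posz 24), (ZMal (Mu (V 3) (Mu (V 5) (V 0))) (V 1) (V 2) (V 3)));
  ((Negz 18), (ZMal (Mu (V 3) (Mu (V 4) (V 0))) (V 1) (V 2) (V 4)));
  ((Negz 18), (ZMal (Mu (V 5) (Mu (V 3) (V 0))) (V 1) (V 2) (V 3)));
  ((Posz 24), (ZMal (Mu (V 4) (Mu (V 3) (V 0))) (V 1) (V 2) (V 4)));
  ((Negz 4), (ZMal (Mu (V 4) (Mu (V 4) (V 0))) (V 1) (V 2) (V 3)));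
  ((Negz 9), (ZMal (V 0) (V 1) (V 3) (Mu (V 3) (Mu (V 5) (V 2)))));
  ((Posz 10), (ZMal (V 0) (V 1) (V 3) (Mu (V 5) (Mu (V 3) (V 2)))));
  ((Posz 10), (ZMal (V 0) (V 1) (V 4) (Mu (V 3) (Mu (V 4) (V 2)))));
  ((Negz 9), (ZMal (V 0) (V 1) (V 4) (Mu (V 4) (Mu (V 3) (V 2)))));
  ((Negz 9), (ZMal (V 0) (Mu (V 3) (V 1)) (V 4) (Mu (V 4) (V 2))));
  ((Posz 10), (ZMal (V 0) (Mu (V 3) (V 1)) (V 5) (Mu (V 3) (V 2))));
  ((Negz 9), (ZMal (V 0) (Mu (V 5) (V 1)) (V 3) (Mu (V 3) (V 2))));
  ((Posz 10), (ZMal (V 0) (Mu (V 4) (V 1)) (V 3) (Mu (V 4) (V 2))));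
  ((Negz 4), (ZMal (Mu (V 3) (V 0)) (V 1) (V 3) (Mu (V 5) (V 2))));
  ((Posz 14), (ZMal (Mu (V 3) (V 0)) (V 1) (V 4) (Mu (V 4) (V 2))));
  ((Negz 8), (ZMal (Mu (V 3) (V 0)) (V 1) (V 5) (Mu (V 3) (V 2))));
  ((Posz 14), (ZMal (Mu (V 5) (V 0)) (V 1) (V 3) (Mu (V 3) (V 2))));
  ((Negz 8), (ZMal (Mu (V 4) (V 0)) (V 1) (V 3) (Mu (V 4) (V 2))));
  ((Negz 4), (ZMal (Mu (V 4) (V 0)) (V 1) (V 4) (Mu (V 3) (V 2))));
  ((Negz 15), (ZMal (Mu (V 3) (V 0)) (Mu (V 3) (V 1)) (V 5) (V 2)));
  ((Posz 10), (ZMal (Mu (V 3) (V 0)) (Mu (V 5) (V 1)) (V 3) (V 2)));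
  ((Posz 6), (ZMal (Mu (V 3) (V 0)) (Mu (V 4) (V 1)) (V 4) (V 2)));
  ((Posz 6), (ZMal (Mu (V 5) (V 0)) (Mu (V 3) (V 1)) (V 3) (V 2)));
  ((Posz 10), (ZMal (Mu (V 4) (V 0)) (Mu (V 3) (V 1)) (V 4) (V 2)));
  ((Negz 15), (ZMal (Mu (V 4) (V 0)) (Mu (V 4) (V 1)) (V 3) (V 2)));
  ((Negz 9), (ZMal (Mu (V 3) (Mu (V 3) (V 0))) (V 1) (V 5) (V 2)));
  ((Posz 10), (ZMal (Mu (V 3) (Mu (V 5) (V 0))) (V 1) (V 3) (V 2)));
  ((Negz 3), (ZMal (Mu (V 3) (Mu (V 4) (V 0))) (V 1) (V 4) (V 2)));
  ((Posz 14), (ZMal (Mu (V 4) (Mu (V 3) (V 0))) (V 1) (V 4) (V 2)));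
  ((Negz 9), (ZMal (Mu (V 4) (Mu (V 4) (V 0))) (V 1) (V 3) (V 2)));
  ((Negz 5), (ZMal (Mu (V 0) (V 2)) (V 3) (Mu (V 3) (V 1)) (V 5)));
  ((Posz 6), (ZMal (Mu (V 0) (V 2)) (V 3) (Mu (V 5) (V 1)) (V 3)));
  ((Posz 6), (ZMal (Mu (V 0) (V 2)) (V 4) (Mu (V 3) (V 1)) (V 4)));
  ((Negz 5), (ZMal (Mu (V 0) (V 2)) (V 4) (Mu (V 4) (V 1)) (V 3)));
  ((Negz 5), (ZMal (Mu (V 3) (Mu (V 0) (V 2))) (V 5) (V 1) (V 3)));
  ((Posz 6), (ZMal (Mu (V 4) (Mu (V 0) (V 2))) (V 4) (V 1) (V 3)));
  ((Posz 10), (ZMal (Mu (V 0) (Mu (V 3) (V 2))) (V 5) (V 1) (V 3)));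
  ((Negz 9), (ZMal (Mu (V 0) (Mu (V 4) (V 2))) (V 4) (V 1) (V 3)));
  ((Posz 15), (ZMal (Mu (V 2) (Mu (V 3) (V 0))) (V 5) (V 1) (V 3)));
  ((Negz 14), (ZMal (Mu (V 2) (Mu (V 4) (V 0))) (V 4) (V 1) (V 3)));
  ((Negz 5), (ZMal (V 0) (V 2) (Mu (V 3) (Mu (V 5) (V 1))) (V 3)));
  ((Posz 6), (ZMal (V 0) (V 2) (Mu (V 3) (Mu (V 4) (V 1))) (V 4)));
  ((Posz 6), (ZMal (V 0) (V 2) (Mu (V 5) (Mu (V 3) (V 1))) (V 3)));
  ((Negz 5), (ZMal (V 0) (V 2) (Mu (V 4) (Mu (V 3) (V 1))) (V 4)));
  ((Negz 9), (ZMal (V 0) (Mu (V 3) (Mu (V 5) (V 2))) (V 1) (V 3)));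
  ((Posz 10), (ZMal (V 0) (Mu (V 3) (Mu (V 4) (V 2))) (V 1) (V 4)));
  ((Posz 10), (ZMal (V 0) (Mu (V 5) (Mu (V 3) (V 2))) (V 1) (V 3)));
  ((Negz 9), (ZMal (V 0) (Mu (V 4) (Mu (V 3) (V 2))) (V 1) (V 4)));
  ((Negz 0), (ZMal (Mu (V 3) (V 0)) (V 2) (Mu (V 3) (V 1)) (V 5)));
  ((Negz 4), (ZMal (Mu (V 3) (V 0)) (V 2) (Mu (V 5) (V 1)) (V 3)));
  ((Posz 6), (ZMal (Mu (V 3) (V 0)) (V 2) (Mu (V 4) (V 1)) (V 4)));
  ((Posz 6), (ZMal (Mu (V 5) (V 0)) (V 2) (Mu (V 3) (V 1)) (V 3)));
  ((Negz 4), (ZMal (Mu (V 4) (V 0)) (V 2) (Mu (V 3) (V 1)) (V 4)));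
  ((Negz 0), (ZMal (Mu (V 4) (V 0)) (V 2) (Mu (V 4) (V 1)) (V 3)));
  ((Negz 8), (ZMal (Mu (V 3) (V 0)) (Mu (V 3) (V 2)) (V 1) (V 5)));
  ((Negz 4), (ZMal (Mu (V 3) (V 0)) (Mu (V 5) (V 2)) (V 1) (V 3)));
  ((Posz 14), (ZMal (Mu (V 3) (V 0)) (Mu (V 4) (V 2)) (V 1) (V 4)));
  ((Posz 14), (ZMal (Mu (V 5) (V 0)) (Mu (V 3) (V 2)) (V 1) (V 3)));
  ((Negz 4), (ZMal (Mu (V 4) (V 0)) (Mu (V 3) (V 2)) (V 1) (V 4)));
  ((Negz 8), (ZMal (Mu (V 4) (V 0)) (Mu (V 4) (V 2)) (V 1) (V 3)));
  ((Negz 9), (ZMal (Mu (V 3) (Mu (V 3) (V 0))) (V 2) (V 1) (V 5)));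
  ((Posz 10), (ZMal (Mu (V 3) (Mu (V 5) (V 0))) (V 2) (V 1) (V 3)));
  ((Negz 3), (ZMal (Mu (V 3) (Mu (V 4) (V 0))) (V 2) (V 1) (V 4)));
  ((Posz 14), (ZMal (Mu (V 4) (Mu (V 3) (V 0))) (V 2) (V 1) (V 4)));
  ((Negz 9), (ZMal (Mu (V 4) (Mu (V 4) (V 0))) (V 2) (V 1) (V 3)));
  ((Posz 10), (ZMal (V 0) (V 3) (Mu (V 3) (Mu (V 1) (V 2))) (V 5)));
  ((Negz 9), (ZMal (V 0) (V 3) (Mu (V 4) (Mu (V 1) (V 2))) (V 4)));
  ((Posz 14), (ZMal (V 0) (V 3) (Mu (V 1) (Mu (V 3) (V 2))) (V 5)));
  ((Negz 13), (ZMal (V 0) (V 3) (Mu (V 1) (Mu (V 4) (V 2))) (V 4)));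
  ((Negz 5), (ZMal (V 0) (V 3) (Mu (V 2) (Mu (V 3) (V 1))) (V 5)));
  ((Posz 6), (ZMal (V 0) (V 3) (Mu (V 2) (Mu (V 4) (V 1))) (V 4)));
  ((Posz 5), (ZMal (Mu (V 3) (V 0)) (V 3) (Mu (V 1) (V 2)) (V 5)));
  ((Negz 9), (ZMal (Mu (V 3) (V 0)) (V 4) (Mu (V 1) (V 2)) (V 4)));
  ((Posz 10), (ZMal (Mu (V 3) (V 0)) (V 5) (Mu (V 1) (V 2)) (V 3)));
  ((Negz 9), (ZMal (Mu (V 5) (V 0)) (V 3) (Mu (V 1) (V 2)) (V 3)));
  ((Posz 5), (ZMal (Mu (V 4) (V 0)) (V 3) (Mu (V 1) (V 2)) (V 4)));
  ((Posz 14), (ZMal (Mu (V 3) (V 0)) (V 4) (V 1) (Mu (V 4) (V 2))));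
  ((Negz 13), (ZMal (Mu (V 3) (V 0)) (V 5) (V 1) (Mu (V 3) (V 2))));
  ((Posz 14), (ZMal (Mu (V 5) (V 0)) (V 3) (V 1) (Mu (V 3) (V 2))));
  ((Negz 13), (ZMal (Mu (V 4) (V 0)) (V 3) (V 1) (Mu (V 4) (V 2))));
  ((Posz 6), (ZMal (Mu (V 3) (V 0)) (V 4) (Mu (V 4) (V 1)) (V 2)));
  ((Negz 5), (ZMal (Mu (V 3) (V 0)) (V 5) (Mu (V 3) (V 1)) (V 2)));
  ((Posz 6), (ZMal (Mu (V 5) (V 0)) (V 3) (Mu (V 3) (V 1)) (V 2)));
  ((Negz 5), (ZMal (Mu (V 4) (V 0)) (V 3) (Mu (V 4) (V 1)) (V 2)));
  ((Negz 4), (ZMal (Mu (V 3) (Mu (V 3) (V 0))) (V 5) (V 1) (V 2)));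
  ((Posz 10), (ZMal (Mu (V 3) (Mu (V 5) (V 0))) (V 3) (V 1) (V 2)));
  ((Negz 4), (ZMal (Mu (V 3) (Mu (V 4) (V 0))) (V 4) (V 1) (V 2)));
  ((Negz 4), (ZMal (Mu (V 5) (Mu (V 3) (V 0))) (V 3) (V 1) (V 2)));
  ((Posz 10), (ZMal (Mu (V 4) (Mu (V 3) (V 0))) (V 4) (V 1) (V 2)));
  ((Negz 4), (ZMal (Mu (V 4) (Mu (V 4) (V 0))) (V 3) (V 1) (V 2)));
  ((Negz 5), (ZMal (Mu (V 3) (Mu (V 0) (V 2))) (V 3) (V 5) (V 1)));
  ((Posz 6), (ZMal (Mu (V 4) (Mu (V 0) (V 2))) (V 3) (V 4) (V 1)));
  ((Posz 10), (ZMal (Mu (V 0) (Mu (V 3) (V 2))) (V 3) (V 5) (V 1)));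
  ((Negz 9), (ZMal (Mu (V 0) (Mu (V 4) (V 2))) (V 3) (V 4) (V 1)));
  ((Posz 15), (ZMal (Mu (V 2) (Mu (V 3) (V 0))) (V 3) (V 5) (V 1)));
  ((Negz 14), (ZMal (Mu (V 2) (Mu (V 4) (V 0))) (V 3) (V 4) (V 1)));
  ((Negz 5), (ZMal (V 0) (V 2) (V 3) (Mu (V 3) (Mu (V 5) (V 1)))));
  ((Posz 6), (ZMal (V 0) (V 2) (V 3) (Mu (V 5) (Mu (V 3) (V 1)))));
  ((Posz 6), (ZMal (V 0) (V 2) (V 4) (Mu (V 3) (Mu (V 4) (V 1)))));
  ((Negz 5), (ZMal (V 0) (V 2) (V 4) (Mu (V 4) (Mu (V 3) (V 1)))));
  ((Negz 9), (ZMal (V 0) (Mu (V 3) (V 2)) (V 4) (Mu (V 4) (V 1))));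
  ((Posz 10), (ZMal (V 0) (Mu (V 3) (V 2)) (V 5) (Mu (V 3) (V 1))));
  ((Negz 9), (ZMal (V 0) (Mu (V 5) (V 2)) (V 3) (Mu (V 3) (V 1))));
  ((Posz 10), (ZMal (V 0) (Mu (V 4) (V 2)) (V 3) (Mu (V 4) (V 1))));
  ((Posz 5), (ZMal (Mu (V 3) (V 0)) (V 2) (V 3) (Mu (V 5) (V 1))));
  ((Negz 4), (ZMal (Mu (V 3) (V 0)) (V 2) (V 5) (Mu (V 3) (V 1))));
  ((Negz 4), (ZMal (Mu (V 4) (V 0)) (V 2) (V 3) (Mu (V 4) (V 1))));
  ((Posz 5), (ZMal (Mu (V 4) (V 0)) (V 2) (V 4) (Mu (V 3) (V 1))));
  ((Negz 4), (ZMal (Mu (V 3) (Mu (V 3) (V 0))) (V 2) (V 5) (V 1)));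
  ((Posz 24), (ZMal (Mu (V 3) (Mu (V 5) (V 0))) (V 2) (V 3) (V 1)));
  ((Negz 18), (ZMal (Mu (V 3) (Mu (V 4) (V 0))) (V 2) (V 4) (V 1)));
  ((Negz 18), (ZMal (Mu (V 5) (Mu (V 3) (V 0))) (V 2) (V 3) (V 1)));
  ((Posz 24), (ZMal (Mu (V 4) (Mu (V 3) (V 0))) (V 2) (V 4) (V 1)));
  ((Negz 4), (ZMal (Mu (V 4) (Mu (V 4) (V 0))) (V 2) (V 3) (V 1)));
  ((Negz 9), (ZMal (V 0) (V 3) (V 4) (Mu (V 4) (Mu (V 1) (V 2)))));
  ((Negz 13), (ZMal (V 0) (V 3) (V 4) (Mu (V 1) (Mu (V 4) (V 2)))));
  ((Posz 6), (ZMal (V 0) (V 3) (V 4) (Mu (V 2) (Mu (V 4) (V 1)))));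
  ((Posz 10), (ZMal (V 0) (V 3) (V 5) (Mu (V 3) (Mu (V 1) (V 2)))));
  ((Posz 14), (ZMal (V 0) (V 3) (V 5) (Mu (V 1) (Mu (V 3) (V 2)))));
  ((Negz 5), (ZMal (V 0) (V 3) (V 5) (Mu (V 2) (Mu (V 3) (V 1)))));
  ((Posz 5), (ZMal (Mu (V 3) (V 0)) (V 3) (V 5) (Mu (V 1) (V 2))));
  ((Negz 4), (ZMal (Mu (V 4) (V 0)) (V 3) (V 4) (Mu (V 1) (V 2))));
  ((Negz 23), (ZR (ZN 0 3 4) (Mu (V 1) (Mu (V 4) (V 2)))));
  ((Negz 3), (ZR (ZN 0 3 4) (Mu (V 2) (Mu (V 4) (V 1)))));
  ((Negz 3), (ZR (ZN 0 3 5) (Mu (V 3) (Mu (V 1) (V 2)))));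
  ((Posz 24), (ZR (ZN 0 3 5) (Mu (V 1) (Mu (V 3) (V 2)))));
  ((Posz 4), (ZR (ZMal (V 0) (V 3) (V 3) (V 5)) (Mu (V 1) (V 2))));
  ((Posz 14), (ZR (ZMal (V 0) (V 3) (V 5) (V 3)) (Mu (V 1) (V 2))));
  ((Posz 10), (ZR (ZMal (V 0) (V 4) (V 3) (V 4)) (Mu (V 1) (V 2))));
  ((Negz 3), (ZR (ZN 1 3 4) (Mu (V 0) (Mu (V 4) (V 2)))));
  ((Negz 15), (ZR (ZN 1 3 4) (Mu (V 2) (Mu (V 4) (V 0)))));
  ((Posz 4), (ZR (ZN 1 3 5) (Mu (V 0) (Mu (V 3) (V 2)))));
  ((Posz 16), (ZR (ZN 1 3 5) (Mu (V 2) (Mu (V 3) (V 0)))));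
  ((Negz 5), (ZR (ZMal (V 1) (V 3) (V 5) (V 3)) (Mu (V 0) (V 2))));
  ((Negz 5), (ZR (ZMal (V 1) (V 4) (V 3) (V 4)) (Mu (V 0) (V 2))));
  ((Negz 19), (ZR (ZN 2 3 4) (Mu (V 1) (Mu (V 4) (V 0)))));
  ((Posz 20), (ZR (ZN 2 3 5) (Mu (V 1) (Mu (V 3) (V 0)))));
  ((Negz 9), (ZR (ZMal (V 2) (V 3) (V 5) (V 3)) (Mu (V 0) (V 1))));
  ((Negz 9), (ZR (ZMal (V 2) (V 4) (V 3) (V 4)) (Mu (V 0) (V 1))));
  ((Posz 14), (ZR (ZMal (V 0) (V 1) (V 3) (V 4)) (Mu (V 4) (V 2))));
  ((Negz 13), (ZR (ZMal (V 0) (V 1) (V 3) (V 5)) (Mu (V 3) (V 2))));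
  ((Posz 10), (ZR (ZMal (V 0) (V 1) (V 4) (V 3)) (Mu (V 4) (V 2))));
  ((Negz 9), (ZR (ZMal (V 0) (V 1) (V 5) (V 3)) (Mu (V 3) (V 2))));
  ((Negz 9), (ZR (ZMal (V 0) (V 3) (V 1) (V 3)) (Mu (V 5) (V 2))));
  ((Posz 24), (ZR (ZMal (V 0) (V 3) (V 1) (V 4)) (Mu (V 4) (V 2))));
  ((Negz 13), (ZR (ZMal (V 0) (V 3) (V 1) (V 5)) (Mu (V 3) (V 2))));
  ((Posz 10), (ZR (ZMal (V 0) (V 4) (V 1) (V 3)) (Mu (V 4) (V 2))));
  ((Negz 9), (ZR (ZMal (V 0) (V 4) (V 1) (V 4)) (Mu (V 3) (V 2))));
  ((Posz 24), (ZR (ZMal (V 0) (V 3) (V 4) (V 1)) (Mu (V 4) (V 2))));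
  ((Negz 23), (ZR (ZMal (V 0) (V 3) (V 5) (V 1)) (Mu (V 3) (V 2))));
  ((Posz 4), (ZR (ZR (ZN 0 3 4) (V 1)) (Mu (V 4) (V 2))));
  ((Negz 3), (ZR (ZR (ZN 1 3 4) (V 0)) (Mu (V 4) (V 2))));
  ((Posz 4), (ZR (ZR (ZN 1 3 5) (V 0)) (Mu (V 3) (V 2))));
  ((Posz 4), (ZR (ZMal (V 0) (Mu (V 3) (V 1)) (V 3) (V 5)) (V 2)));
  ((Negz 3), (ZR (ZMal (V 0) (Mu (V 4) (V 1)) (V 3) (V 4)) (V 2)));
  ((Posz 4), (ZR (ZMal (V 0) (V 3) (Mu (V 3) (V 1)) (V 5)) (V 2)));
  ((Negz 3), (ZR (ZMal (V 0) (V 3) (Mu (V 4) (V 1)) (V 4)) (V 2)));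
  ((Negz 9), (ZR (ZMal (Mu (V 3) (V 0)) (V 3) (V 1) (V 5)) (V 2)));
  ((Negz 9), (ZR (ZMal (Mu (V 3) (V 0)) (V 4) (V 1) (V 4)) (V 2)));
  ((Posz 20), (ZR (ZMal (Mu (V 3) (V 0)) (V 5) (V 1) (V 3)) (V 2)));
  ((Negz 9), (ZR (ZMal (Mu (V 5) (V 0)) (V 3) (V 1) (V 3)) (V 2)));
  ((Posz 20), (ZR (ZMal (Mu (V 4) (V 0)) (V 3) (V 1) (V 4)) (V 2)));
  ((Negz 9), (ZR (ZMal (Mu (V 4) (V 0)) (V 4) (V 1) (V 3)) (V 2)));
  ((Negz 3), (ZR (ZMal (V 0) (V 3) (V 4) (Mu (V 4) (V 1))) (V 2)));
  ((Posz 4), (ZR (ZMal (V 0) (V 3) (V 5) (Mu (V 3) (V 1))) (V 2)));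
  ((Negz 19), (ZR (ZR (ZN 0 3 4) (Mu (V 4) (V 1))) (V 2)));
  ((Posz 24), (ZR (ZR (ZN 0 3 5) (Mu (V 3) (V 1))) (V 2)));
  ((Negz 23), (ZR (ZR (ZMal (V 0) (V 3) (V 3) (V 5)) (V 1)) (V 2)));
  ((Posz 24), (ZR (ZR (ZMal (V 0) (V 3) (V 4) (V 4)) (V 1)) (V 2)));
  ((Negz 3), (ZR (ZR (ZMal (V 0) (V 3) (V 5) (V 3)) (V 1)) (V 2)));
  ((Posz 20), (ZR (ZR (ZMal (V 0) (V 4) (V 3) (V 4)) (V 1)) (V 2)));
  ((Negz 3), (ZR (ZR (ZN 1 3 4) (Mu (V 4) (V 0))) (V 2)));
  ((Posz 4), (ZR (ZR (ZN 1 3 5) (Mu (V 3) (V 0))) (V 2)));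
  ((Posz 24), (ZR (ZR (ZR (ZN 0 3 4) (V 1)) (V 4)) (V 2)));
  ((Negz 19), (ZR (ZR (ZR (ZN 0 3 5) (V 1)) (V 3)) (V 2)));
  ((Negz 5), (ZR (ZMal (V 0) (V 2) (V 3) (V 4)) (Mu (V 4) (V 1))));
  ((Posz 6), (ZR (ZMal (V 0) (V 2) (V 3) (V 5)) (Mu (V 3) (V 1))));
  ((Posz 6), (ZR (ZMal (V 0) (V 2) (V 4) (V 3)) (Mu (V 4) (V 1))));
  ((Negz 5), (ZR (ZMal (V 0) (V 2) (V 5) (V 3)) (Mu (V 3) (V 1))));
  ((Negz 9), (ZR (ZMal (V 0) (V 3) (V 2) (V 3)) (Mu (V 5) (V 1))));
  ((Posz 10), (ZR (ZMal (V 0) (V 3) (V 2) (V 5)) (Mu (V 3) (V 1))));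
  ((Posz 10), (ZR (ZMal (V 0) (V 4) (V 2) (V 3)) (Mu (V 4) (V 1))));
  ((Negz 9), (ZR (ZMal (V 0) (V 4) (V 2) (V 4)) (Mu (V 3) (V 1))));
  ((Posz 20), (ZR (ZR (ZN 0 3 4) (V 2)) (Mu (V 4) (V 1))));
  ((Negz 19), (ZR (ZR (ZN 0 3 5) (V 2)) (Mu (V 3) (V 1))));
  ((Posz 4), (ZR (ZR (ZN 2 3 4) (V 0)) (Mu (V 4) (V 1))));
  ((Negz 3), (ZR (ZR (ZN 2 3 5) (V 0)) (Mu (V 3) (V 1))));
  ((Posz 14), (ZR (ZMal (Mu (V 3) (V 0)) (V 4) (V 2) (V 4)) (V 1)));
  ((Negz 13), (ZR (ZMal (Mu (V 3) (V 0)) (V 5) (V 2) (V 3)) (V 1)));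
  ((Posz 14), (ZR (ZMal (Mu (V 5) (V 0)) (V 3) (V 2) (V 3)) (V 1)));
  ((Negz 13), (ZR (ZMal (Mu (V 4) (V 0)) (V 3) (V 2) (V 4)) (V 1)));
  ((Posz 24), (ZR (ZR (ZN 0 3 4) (Mu (V 4) (V 2))) (V 1)));
  ((Negz 27), (ZR (ZR (ZN 0 3 5) (Mu (V 3) (V 2))) (V 1)));
  ((Posz 4), (ZR (ZR (ZMal (V 0) (V 3) (V 3) (V 5)) (V 2)) (V 1)));
  ((Negz 3), (ZR (ZR (ZMal (V 0) (V 4) (V 3) (V 4)) (V 2)) (V 1)));
  ((Posz 24), (ZR (ZR (ZN 2 3 4) (Mu (V 4) (V 0))) (V 1)));
  ((Negz 23), (ZR (ZR (ZN 2 3 5) (Mu (V 3) (V 0))) (V 1)));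
  ((Posz 10), (ZR (ZMal (V 1) (V 2) (V 3) (V 4)) (Mu (V 4) (V 0))));
  ((Negz 9), (ZR (ZMal (V 1) (V 2) (V 3) (V 5)) (Mu (V 3) (V 0))));
  ((Negz 9), (ZR (ZMal (V 1) (V 2) (V 4) (V 3)) (Mu (V 4) (V 0))));
  ((Posz 10), (ZR (ZMal (V 1) (V 2) (V 5) (V 3)) (Mu (V 3) (V 0))));
  ((Negz 15), (ZR (ZR (ZN 1 3 4) (V 2)) (Mu (V 4) (V 0))));
  ((Posz 16), (ZR (ZR (ZN 1 3 5) (V 2)) (Mu (V 3) (V 0))));
  ((Posz 4), (ZR (ZR (ZN 1 3 4) (Mu (V 4) (V 2))) (V 0)));
  ((Negz 3), (ZR (ZR (ZN 1 3 5) (Mu (V 3) (V 2))) (V 0)))].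

Definition certH : seq (int * zp) := [::
  ((Negz 11), (ZMal (V 0) (V 1) (V 2) (V 4)));
  ((Negz 3), (ZMal (V 0) (V 2) (V 1) (V 4)));
  ((Posz 20), (ZMal (V 0) (V 4) (V 1) (V 2)));
  ((Posz 12), (ZMal (V 0) (V 2) (V 4) (V 1)));
  ((Negz 3), (ZMal (Mu (V 0) (V 1)) (V 2) (V 3) (V 5)));
  ((Negz 17), (ZMal (Mu (V 0) (V 1)) (V 3) (V 2) (V 5)));
  ((Posz 8), (ZMal (Mu (V 0) (V 1)) (V 4) (V 2) (V 4)));
  ((Negz 1), (ZMal (Mu (V 0) (V 1)) (V 5) (V 2) (V 3)));
  ((Negz 3), (ZMal (Mu (V 0) (V 1)) (V 3) (V 5) (V 2)));
  ((Negz 7), (ZMal (V 0) (Mu (V 1) (V 2)) (V 3) (V 5)));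
  ((Negz 27), (ZMal (V 0) (V 1) (Mu (V 3) (V 2)) (V 5)));
  ((Posz 20), (ZMal (V 0) (V 1) (Mu (V 5) (V 2)) (V 3)));
  ((Posz 4), (ZMal (V 0) (V 1) (Mu (V 4) (V 2)) (V 4)));
  ((Posz 18), (ZMal (V 0) (Mu (V 3) (V 1)) (V 2) (V 5)));
  ((Posz 42), (ZMal (V 0) (Mu (V 5) (V 1)) (V 2) (V 3)));
  ((Negz 29), (ZMal (V 0) (Mu (V 4) (V 1)) (V 2) (V 4)));
  ((Posz 64), (ZMal (Mu (V 3) (V 0)) (V 1) (V 2) (V 5)));
  ((Negz 5), (ZMal (Mu (V 5) (V 0)) (V 1) (V 2) (V 3)));
  ((Negz 28), (ZMal (Mu (V 4) (V 0)) (V 1) (V 2) (V 4)));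
  ((Posz 42), (ZMal (V 0) (V 1) (V 3) (Mu (V 5) (V 2))));
  ((Negz 13), (ZMal (V 0) (V 1) (V 4) (Mu (V 4) (V 2))));
  ((Negz 13), (ZMal (V 0) (V 1) (V 5) (Mu (V 3) (V 2))));
  ((Posz 15), (ZMal (V 0) (Mu (V 3) (V 1)) (V 5) (V 2)));
  ((Negz 12), (ZMal (V 0) (Mu (V 5) (V 1)) (V 3) (V 2)));
  ((Negz 0), (ZMal (V 0) (Mu (V 4) (V 1)) (V 4) (V 2)));
  ((Posz 45), (ZMal (Mu (V 3) (V 0)) (V 1) (V 5) (V 2)));
  ((Posz 15), (ZMal (Mu (V 5) (V 0)) (V 1) (V 3) (V 2)));
  ((Negz 23), (ZMal (Mu (V 4) (V 0)) (V 1) (V 4) (V 2)));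
  ((Negz 8), (ZMal (Mu (V 0) (V 2)) (V 3) (V 1) (V 5)));
  ((Posz 3), (ZMal (Mu (V 0) (V 2)) (V 4) (V 1) (V 4)));
  ((Posz 3), (ZMal (Mu (V 0) (V 2)) (V 5) (V 1) (V 3)));
  ((Posz 33), (ZMal (V 0) (V 2) (Mu (V 3) (V 1)) (V 5)));
  ((Posz 29), (ZMal (V 0) (V 2) (Mu (V 5) (V 1)) (V 3)));
  ((Negz 30), (ZMal (V 0) (V 2) (Mu (V 4) (V 1)) (V 4)));
  ((Negz 38), (ZMal (V 0) (Mu (V 3) (V 2)) (V 1) (V 5)));
  ((Posz 37), (ZMal (V 0) (Mu (V 5) (V 2)) (V 1) (V 3)));
  ((Posz 1), (ZMal (V 0) (Mu (V 4) (V 2)) (V 1) (V 4)));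
  ((Posz 50), (ZMal (Mu (V 3) (V 0)) (V 2) (V 1) (V 5)));
  ((Negz 9), (ZMal (Mu (V 5) (V 0)) (V 2) (V 1) (V 3)));
  ((Negz 13), (ZMal (Mu (V 4) (V 0)) (V 2) (V 1) (V 4)));
  ((Negz 12), (ZMal (V 0) (V 3) (Mu (V 1) (V 2)) (V 5)));
  ((Negz 4), (ZMal (V 0) (V 4) (Mu (V 1) (V 2)) (V 4)));
  ((Posz 15), (ZMal (V 0) (V 5) (Mu (V 1) (V 2)) (V 3)));
  ((Posz 17), (ZMal (V 0) (V 3) (V 1) (Mu (V 5) (V 2))));
  ((Negz 2), (ZMal (V 0) (V 4) (V 1) (Mu (V 4) (V 2))));
  ((Negz 10), (ZMal (V 0) (V 5) (V 1) (Mu (V 3) (V 2))));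
  ((Posz 7), (ZMal (V 0) (V 3) (Mu (V 5) (V 1)) (V 2)));
  ((Negz 0), (ZMal (V 0) (V 4) (Mu (V 4) (V 1)) (V 2)));
  ((Negz 4), (ZMal (V 0) (V 5) (Mu (V 3) (V 1)) (V 2)));
  ((Posz 38), (ZMal (Mu (V 3) (V 0)) (V 5) (V 1) (V 2)));
  ((Negz 7), (ZMal (Mu (V 5) (V 0)) (V 3) (V 1) (V 2)));
  ((Negz 14), (ZMal (Mu (V 4) (V 0)) (V 4) (V 1) (V 2)));
  ((Posz 17), (ZMal (V 0) (V 2) (V 3) (Mu (V 5) (V 1))));
  ((Negz 14), (ZMal (V 0) (V 2) (V 4) (Mu (V 4) (V 1))));
  ((Posz 13), (ZMal (V 0) (V 2) (V 5) (Mu (V 3) (V 1))));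
  ((Negz 7), (ZMal (V 0) (Mu (V 3) (V 2)) (V 5) (V 1)));
  ((Posz 8), (ZMal (V 0) (Mu (V 5) (V 2)) (V 3) (V 1)));
  ((Posz 59), (ZMal (Mu (V 3) (V 0)) (V 2) (V 5) (V 1)));
  ((Negz 0), (ZMal (Mu (V 5) (V 0)) (V 2) (V 3) (V 1)));
  ((Negz 28), (ZMal (Mu (V 4) (V 0)) (V 2) (V 4) (V 1)));
  ((Negz 7), (ZMal (V 0) (V 3) (V 5) (Mu (V 1) (V 2))));
  ((Posz 72), (ZR (ZN 0 3 5) (Mu (V 1) (V 2))));
  ((Posz 168), (ZR (ZN 1 3 5) (Mu (V 0) (V 2))));
  ((Negz 79), (ZR (ZN 2 3 5) (Mu (V 0) (V 1))));
  ((Posz 24), (ZR (ZMal (V 0) (V 1) (V 3) (V 5)) (V 2)));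
  ((Negz 19), (ZR (ZMal (V 0) (V 1) (V 5) (V 3)) (V 2)));
  ((Negz 2), (ZR (ZMal (V 0) (V 3) (V 1) (V 5)) (V 2)));
  ((Posz 7), (ZR (ZMal (V 0) (V 4) (V 1) (V 4)) (V 2)));
  ((Negz 6), (ZR (ZMal (V 0) (V 5) (V 1) (V 3)) (V 2)));
  ((Posz 4), (ZR (ZMal (V 0) (V 3) (V 5) (V 1)) (V 2)));
  ((Posz 92), (ZR (ZR (ZN 0 3 5) (V 1)) (V 2)));
  ((Posz 20), (ZR (ZR (ZN 1 3 5) (V 0)) (V 2)));
  ((Posz 12), (ZR (ZMal (V 0) (V 2) (V 3) (V 5)) (V 1)));
  ((Negz 11), (ZR (ZMal (V 0) (V 2) (V 5) (V 3)) (V 1)));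
  ((Posz 14), (ZR (ZMal (V 0) (V 3) (V 2) (V 5)) (V 1)));
  ((Negz 17), (ZR (ZMal (V 0) (V 4) (V 2) (V 4)) (V 1)));
  ((Posz 22), (ZR (ZMal (V 0) (V 5) (V 2) (V 3)) (V 1)));
  ((Posz 32), (ZR (ZR (ZN 0 3 5) (V 2)) (V 1)));
  ((Posz 12), (ZR (ZR (ZN 2 3 5) (V 0)) (V 1)));
  ((Negz 19), (ZR (ZMal (V 1) (V 2) (V 3) (V 5)) (V 0)));
  ((Posz 20), (ZR (ZMal (V 1) (V 2) (V 5) (V 3)) (V 0)));
  ((Negz 19), (ZR (ZR (ZN 1 3 5) (V 2)) (V 0)));
  ((Negz 11), (ZR (ZR (ZN 2 3 5) (V 1)) (V 0)));
  ((Posz 28), (ZMal (Mu (V 0) (V 1)) (Mu (V 3) (V 2)) (V 4) (V 5)));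
  ((Posz 28), (ZMal (Mu (V 0) (V 1)) (Mu (V 5) (V 2)) (V 3) (V 4)));
  ((Negz 27), (ZMal (Mu (V 0) (V 1)) (Mu (V 4) (V 2)) (V 3) (V 5)));
  ((Negz 17), (ZMal (Mu (V 3) (Mu (V 0) (V 1))) (V 2) (V 4) (V 5)));
  ((Posz 2), (ZMal (Mu (V 5) (Mu (V 0) (V 1))) (V 2) (V 3) (V 4)));
  ((Posz 8), (ZMal (Mu (V 4) (Mu (V 0) (V 1))) (V 2) (V 3) (V 5)));
  ((Negz 4), (ZMal (Mu (V 0) (Mu (V 3) (V 1))) (V 2) (V 4) (V 5)));
  ((Negz 24), (ZMal (Mu (V 0) (Mu (V 5) (V 1))) (V 2) (V 3) (V 4)));
  ((Posz 15), (ZMal (Mu (V 0) (Mu (V 4) (V 1))) (V 2) (V 3) (V 5)));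
  ((Posz 5), (ZMal (Mu (V 1) (Mu (V 3) (V 0))) (V 2) (V 4) (V 5)));
  ((Negz 4), (ZMal (Mu (V 1) (Mu (V 5) (V 0))) (V 2) (V 3) (V 4)));
  ((Posz 18), (ZMal (Mu (V 0) (V 1)) (V 3) (Mu (V 5) (V 2)) (V 4)));
  ((Negz 17), (ZMal (Mu (V 0) (V 1)) (V 3) (Mu (V 4) (V 2)) (V 5)));
  ((Posz 8), (ZMal (Mu (V 0) (V 1)) (V 4) (Mu (V 3) (V 2)) (V 5)));
  ((Posz 20), (ZMal (Mu (V 0) (V 1)) (V 4) (Mu (V 5) (V 2)) (V 3)));
  ((Posz 30), (ZMal (Mu (V 0) (V 1)) (V 5) (Mu (V 3) (V 2)) (V 4)));
  ((Negz 29), (ZMal (Mu (V 0) (V 1)) (V 5) (Mu (V 4) (V 2)) (V 3)));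
  ((Negz 17), (ZMal (Mu (V 3) (Mu (V 0) (V 1))) (V 5) (V 2) (V 4)));
  ((Posz 2), (ZMal (Mu (V 5) (Mu (V 0) (V 1))) (V 4) (V 2) (V 3)));
  ((Posz 8), (ZMal (Mu (V 4) (Mu (V 0) (V 1))) (V 5) (V 2) (V 3)));
  ((Negz 4), (ZMal (Mu (V 0) (Mu (V 3) (V 1))) (V 5) (V 2) (V 4)));
  ((Negz 24), (ZMal (Mu (V 0) (Mu (V 5) (V 1))) (V 4) (V 2) (V 3)));
  ((Posz 15), (ZMal (Mu (V 0) (Mu (V 4) (V 1))) (V 5) (V 2) (V 3)));
  ((Posz 5), (ZMal (Mu (V 1) (Mu (V 3) (V 0))) (V 5) (V 2) (V 4)));
  ((Negz 4), (ZMal (Mu (V 1) (Mu (V 5) (V 0))) (V 4) (V 2) (V 3)));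
  ((Posz 28), (ZMal (Mu (V 0) (V 1)) (V 3) (V 4) (Mu (V 5) (V 2))));
  ((Negz 27), (ZMal (Mu (V 0) (V 1)) (V 3) (V 5) (Mu (V 4) (V 2))));
  ((Posz 28), (ZMal (Mu (V 0) (V 1)) (V 4) (V 5) (Mu (V 3) (V 2))));
  ((Negz 17), (ZMal (Mu (V 3) (Mu (V 0) (V 1))) (V 4) (V 5) (V 2)));
  ((Posz 2), (ZMal (Mu (V 5) (Mu (V 0) (V 1))) (V 3) (V 4) (V 2)));
  ((Posz 8), (ZMal (Mu (V 4) (Mu (V 0) (V 1))) (V 3) (V 5) (V 2)));
  ((Negz 4), (ZMal (Mu (V 0) (Mu (V 3) (V 1))) (V 4) (V 5) (V 2)));
  ((Negz 24), (ZMal (Mu (V 0) (Mu (V 5) (V 1))) (V 3) (V 4) (V 2)));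
  ((Posz 15), (ZMal (Mu (V 0) (Mu (V 4) (V 1))) (V 3) (V 5) (V 2)));
  ((Posz 5), (ZMal (Mu (V 1) (Mu (V 3) (V 0))) (V 4) (V 5) (V 2)));
  ((Negz 4), (ZMal (Mu (V 1) (Mu (V 5) (V 0))) (V 3) (V 4) (V 2)));
  ((Negz 20), (ZMal (Mu (V 0) (V 2)) (Mu (V 3) (V 1)) (V 4) (V 5)));
  ((Negz 20), (ZMal (Mu (V 0) (V 2)) (Mu (V 5) (V 1)) (V 3) (V 4)));
  ((Posz 21), (ZMal (Mu (V 0) (V 2)) (Mu (V 4) (V 1)) (V 3) (V 5)));
  ((Negz 8), (ZMal (Mu (V 3) (Mu (V 0) (V 2))) (V 1) (V 4) (V 5)));
  ((Posz 3), (ZMal (Mu (V 5) (Mu (V 0) (V 2))) (V 1) (V 3) (V 4)));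
  ((Posz 3), (ZMal (Mu (V 4) (Mu (V 0) (V 2))) (V 1) (V 3) (V 5)));
  ((Posz 25), (ZMal (Mu (V 0) (Mu (V 3) (V 2))) (V 1) (V 4) (V 5)));
  ((Posz 5), (ZMal (Mu (V 0) (Mu (V 5) (V 2))) (V 1) (V 3) (V 4)));
  ((Negz 14), (ZMal (Mu (V 0) (Mu (V 4) (V 2))) (V 1) (V 3) (V 5)));
  ((Posz 5), (ZMal (Mu (V 2) (Mu (V 3) (V 0))) (V 1) (V 4) (V 5)));
  ((Negz 24), (ZMal (Mu (V 2) (Mu (V 5) (V 0))) (V 1) (V 3) (V 4)));
  ((Posz 10), (ZMal (Mu (V 2) (Mu (V 4) (V 0))) (V 1) (V 3) (V 5)));
  ((Posz 15), (ZMal (V 0) (Mu (V 3) (Mu (V 1) (V 2))) (V 4) (V 5)));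
  ((Negz 4), (ZMal (V 0) (Mu (V 5) (Mu (V 1) (V 2))) (V 3) (V 4)));
  ((Negz 4), (ZMal (V 0) (Mu (V 4) (Mu (V 1) (V 2))) (V 3) (V 5)));
  ((Posz 11), (ZMal (V 0) (Mu (V 1) (Mu (V 3) (V 2))) (V 4) (V 5)));
  ((Negz 16), (ZMal (V 0) (Mu (V 1) (Mu (V 5) (V 2))) (V 3) (V 4)));
  ((Posz 3), (ZMal (V 0) (Mu (V 1) (Mu (V 4) (V 2))) (V 3) (V 5)));
  ((Negz 4), (ZMal (V 0) (Mu (V 2) (Mu (V 3) (V 1))) (V 4) (V 5)));
  ((Posz 7), (ZMal (V 0) (Mu (V 2) (Mu (V 5) (V 1))) (V 3) (V 4)));
  ((Negz 0), (ZMal (V 0) (Mu (V 2) (Mu (V 4) (V 1))) (V 3) (V 5)));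
  ((Negz 24), (ZMal (Mu (V 3) (V 0)) (Mu (V 1) (V 2)) (V 4) (V 5)));
  ((Negz 34), (ZMal (Mu (V 5) (V 0)) (Mu (V 1) (V 2)) (V 3) (V 4)));
  ((Posz 30), (ZMal (Mu (V 4) (V 0)) (Mu (V 1) (V 2)) (V 3) (V 5)));
  ((Negz 19), (ZMal (V 0) (V 1) (Mu (V 3) (Mu (V 5) (V 2))) (V 4)));
  ((Posz 30), (ZMal (V 0) (V 1) (Mu (V 3) (Mu (V 4) (V 2))) (V 5)));
  ((Posz 20), (ZMal (V 0) (V 1) (Mu (V 5) (Mu (V 3) (V 2))) (V 4)));
  ((Negz 9), (ZMal (V 0) (V 1) (Mu (V 5) (Mu (V 4) (V 2))) (V 3)));
  ((Negz 29), (ZMal (V 0) (V 1) (Mu (V 4) (Mu (V 3) (V 2))) (V 5)));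
  ((Posz 10), (ZMal (V 0) (V 1) (Mu (V 4) (Mu (V 5) (V 2))) (V 3)));
  ((Posz 5), (ZMal (V 0) (Mu (V 3) (V 1)) (Mu (V 5) (V 2)) (V 4)));
  ((Negz 4), (ZMal (V 0) (Mu (V 3) (V 1)) (Mu (V 4) (V 2)) (V 5)));
  ((Negz 4), (ZMal (V 0) (Mu (V 5) (V 1)) (Mu (V 3) (V 2)) (V 4)));
  ((Posz 5), (ZMal (V 0) (Mu (V 5) (V 1)) (Mu (V 4) (V 2)) (V 3)));
  ((Posz 5), (ZMal (V 0) (Mu (V 4) (V 1)) (Mu (V 3) (V 2)) (V 5)));
  ((Negz 4), (ZMal (V 0) (Mu (V 4) (V 1)) (Mu (V 5) (V 2)) (V 3)));
  ((Posz 24), (ZMal (V 0) (Mu (V 3) (Mu (V 5) (V 1))) (V 2) (V 4)));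
  ((Negz 17), (ZMal (V 0) (Mu (V 3) (Mu (V 4) (V 1))) (V 2) (V 5)));
  ((Negz 23), (ZMal (V 0) (Mu (V 5) (Mu (V 3) (V 1))) (V 2) (V 4)));
  ((Posz 30), (ZMal (V 0) (Mu (V 5) (Mu (V 4) (V 1))) (V 2) (V 3)));
  ((Posz 18), (ZMal (V 0) (Mu (V 4) (Mu (V 3) (V 1))) (V 2) (V 5)));
  ((Negz 29), (ZMal (V 0) (Mu (V 4) (Mu (V 5) (V 1))) (V 2) (V 3)));
  ((Posz 5), (ZMal (Mu (V 3) (V 0)) (V 1) (Mu (V 5) (V 2)) (V 4)));
  ((Negz 4), (ZMal (Mu (V 3) (V 0)) (V 1) (Mu (V 4) (V 2)) (V 5)));
  ((Negz 14), (ZMal (Mu (V 5) (V 0)) (V 1) (Mu (V 3) (V 2)) (V 4)));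
  ((Posz 15), (ZMal (Mu (V 5) (V 0)) (V 1) (Mu (V 4) (V 2)) (V 3)));
  ((Posz 10), (ZMal (Mu (V 4) (V 0)) (V 1) (Mu (V 3) (V 2)) (V 5)));
  ((Negz 9), (ZMal (Mu (V 4) (V 0)) (V 1) (Mu (V 5) (V 2)) (V 3)));
  ((Negz 14), (ZMal (Mu (V 3) (V 0)) (Mu (V 5) (V 1)) (V 2) (V 4)));
  ((Posz 15), (ZMal (Mu (V 3) (V 0)) (Mu (V 4) (V 1)) (V 2) (V 5)));
  ((Posz 25), (ZMal (Mu (V 5) (V 0)) (Mu (V 3) (V 1)) (V 2) (V 4)));
  ((Negz 24), (ZMal (Mu (V 5) (V 0)) (Mu (V 4) (V 1)) (V 2) (V 3)));
  ((Negz 19), (ZMal (Mu (V 4) (V 0)) (Mu (V 3) (V 1)) (V 2) (V 5)));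
  ((Posz 20), (ZMal (Mu (V 4) (V 0)) (Mu (V 5) (V 1)) (V 2) (V 3)));
  ((Posz 23), (ZMal (Mu (V 3) (Mu (V 5) (V 0))) (V 1) (V 2) (V 4)));
  ((Negz 41), (ZMal (Mu (V 3) (Mu (V 4) (V 0))) (V 1) (V 2) (V 5)));
  ((Negz 12), (ZMal (Mu (V 5) (Mu (V 3) (V 0))) (V 1) (V 2) (V 4)));
  ((Negz 5), (ZMal (Mu (V 5) (Mu (V 4) (V 0))) (V 1) (V 2) (V 3)));
  ((Posz 37), (ZMal (Mu (V 4) (Mu (V 3) (V 0))) (V 1) (V 2) (V 5)));
  ((Posz 1), (ZMal (Mu (V 4) (Mu (V 5) (V 0))) (V 1) (V 2) (V 3)));
  ((Negz 9), (ZMal (V 0) (V 1) (V 3) (Mu (V 5) (Mu (V 4) (V 2)))));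
  ((Posz 10), (ZMal (V 0) (V 1) (V 3) (Mu (V 4) (Mu (V 5) (V 2)))));
  ((Negz 19), (ZMal (V 0) (V 1) (V 4) (Mu (V 3) (Mu (V 5) (V 2)))));
  ((Posz 20), (ZMal (V 0) (V 1) (V 4) (Mu (V 5) (Mu (V 3) (V 2)))));
  ((Posz 30), (ZMal (V 0) (V 1) (V 5) (Mu (V 3) (Mu (V 4) (V 2)))));
  ((Negz 29), (ZMal (V 0) (V 1) (V 5) (Mu (V 4) (Mu (V 3) (V 2)))));
  ((Posz 10), (ZMal (V 0) (Mu (V 3) (V 1)) (V 4) (Mu (V 5) (V 2))));
  ((Negz 19), (ZMal (V 0) (Mu (V 3) (V 1)) (V 5) (Mu (V 4) (V 2))));
  ((Posz 20), (ZMal (V 0) (Mu (V 5) (V 1)) (V 3) (Mu (V 4) (V 2))));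
  ((Negz 29), (ZMal (V 0) (Mu (V 5) (V 1)) (V 4) (Mu (V 3) (V 2))));
  ((Negz 9), (ZMal (V 0) (Mu (V 4) (V 1)) (V 3) (Mu (V 5) (V 2))));
  ((Posz 30), (ZMal (V 0) (Mu (V 4) (V 1)) (V 5) (Mu (V 3) (V 2))));
  ((Posz 22), (ZMal (Mu (V 3) (V 0)) (V 1) (V 4) (Mu (V 5) (V 2))));
  ((Negz 7), (ZMal (Mu (V 3) (V 0)) (V 1) (V 5) (Mu (V 4) (V 2))));
  ((Posz 18), (ZMal (Mu (V 5) (V 0)) (V 1) (V 3) (Mu (V 4) (V 2))));
  ((Negz 3), (ZMal (Mu (V 5) (V 0)) (V 1) (V 4) (Mu (V 3) (V 2))));
  ((Negz 26), (ZMal (Mu (V 4) (V 0)) (V 1) (V 3) (Mu (V 5) (V 2))));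
  ((Negz 0), (ZMal (Mu (V 4) (V 0)) (V 1) (V 5) (Mu (V 3) (V 2))));
  ((Negz 2), (ZMal (Mu (V 3) (V 0)) (Mu (V 5) (V 1)) (V 4) (V 2)));
  ((Posz 9), (ZMal (Mu (V 3) (V 0)) (Mu (V 4) (V 1)) (V 5) (V 2)));
  ((Posz 35), (ZMal (Mu (V 5) (V 0)) (Mu (V 3) (V 1)) (V 4) (V 2)));
  ((Negz 28), (ZMal (Mu (V 5) (V 0)) (Mu (V 4) (V 1)) (V 3) (V 2)));
  ((Negz 24), (ZMal (Mu (V 4) (V 0)) (Mu (V 3) (V 1)) (V 5) (V 2)));
  ((Posz 13), (ZMal (Mu (V 4) (V 0)) (Mu (V 5) (V 1)) (V 3) (V 2)));
  ((Posz 13), (ZMal (Mu (V 3) (Mu (V 5) (V 0))) (V 1) (V 4) (V 2)));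
  ((Negz 24), (ZMal (Mu (V 3) (Mu (V 4) (V 0))) (V 1) (V 5) (V 2)));
  ((Posz 7), (ZMal (Mu (V 5) (Mu (V 3) (V 0))) (V 1) (V 4) (V 2)));
  ((Negz 6), (ZMal (Mu (V 5) (Mu (V 4) (V 0))) (V 1) (V 3) (V 2)));
  ((Posz 15), (ZMal (Mu (V 4) (Mu (V 3) (V 0))) (V 1) (V 5) (V 2)));
  ((Negz 2), (ZMal (Mu (V 4) (Mu (V 5) (V 0))) (V 1) (V 3) (V 2)));
  ((Posz 9), (ZMal (Mu (V 0) (V 2)) (V 3) (Mu (V 5) (V 1)) (V 4)));
  ((Negz 8), (ZMal (Mu (V 0) (V 2)) (V 3) (Mu (V 4) (V 1)) (V 5)));
  ((Posz 3), (ZMal (Mu (V 0) (V 2)) (V 4) (Mu (V 3) (V 1)) (V 5)));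
  ((Negz 23), (ZMal (Mu (V 0) (V 2)) (V 4) (Mu (V 5) (V 1)) (V 3)));
  ((Negz 17), (ZMal (Mu (V 0) (V 2)) (V 5) (Mu (V 3) (V 1)) (V 4)));
  ((Posz 18), (ZMal (Mu (V 0) (V 2)) (V 5) (Mu (V 4) (V 1)) (V 3)));
  ((Negz 8), (ZMal (Mu (V 3) (Mu (V 0) (V 2))) (V 5) (V 1) (V 4)));
  ((Posz 3), (ZMal (Mu (V 5) (Mu (V 0) (V 2))) (V 4) (V 1) (V 3)));
  ((Posz 3), (ZMal (Mu (V 4) (Mu (V 0) (V 2))) (V 5) (V 1) (V 3)));
  ((Posz 25), (ZMal (Mu (V 0) (Mu (V 3) (V 2))) (V 5) (V 1) (V 4)));
  ((Posz 5), (ZMal (Mu (V 0) (Mu (V 5) (V 2))) (V 4) (V 1) (V 3)));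
  ((Negz 14), (ZMal (Mu (V 0) (Mu (V 4) (V 2))) (V 5) (V 1) (V 3)));
  ((Posz 5), (ZMal (Mu (V 2) (Mu (V 3) (V 0))) (V 5) (V 1) (V 4)));
  ((Negz 24), (ZMal (Mu (V 2) (Mu (V 5) (V 0))) (V 4) (V 1) (V 3)));
  ((Posz 10), (ZMal (Mu (V 2) (Mu (V 4) (V 0))) (V 5) (V 1) (V 3)));
  ((Posz 24), (ZMal (V 0) (V 2) (Mu (V 3) (Mu (V 5) (V 1))) (V 4)));
  ((Negz 17), (ZMal (V 0) (V 2) (Mu (V 3) (Mu (V 4) (V 1))) (V 5)));
  ((Negz 23), (ZMal (V 0) (V 2) (Mu (V 5) (Mu (V 3) (V 1))) (V 4)));
  ((Posz 30), (ZMal (V 0) (V 2) (Mu (V 5) (Mu (V 4) (V 1))) (V 3)));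
  ((Posz 18), (ZMal (V 0) (V 2) (Mu (V 4) (Mu (V 3) (V 1))) (V 5)));
  ((Negz 29), (ZMal (V 0) (V 2) (Mu (V 4) (Mu (V 5) (V 1))) (V 3)));
  ((Negz 4), (ZMal (V 0) (Mu (V 3) (V 2)) (Mu (V 5) (V 1)) (V 4)));
  ((Posz 5), (ZMal (V 0) (Mu (V 3) (V 2)) (Mu (V 4) (V 1)) (V 5)));
  ((Posz 5), (ZMal (V 0) (Mu (V 5) (V 2)) (Mu (V 3) (V 1)) (V 4)));
  ((Negz 4), (ZMal (V 0) (Mu (V 5) (V 2)) (Mu (V 4) (V 1)) (V 3)));
  ((Negz 4), (ZMal (V 0) (Mu (V 4) (V 2)) (Mu (V 3) (V 1)) (V 5)));
  ((Posz 5), (ZMal (V 0) (Mu (V 4) (V 2)) (Mu (V 5) (V 1)) (V 3)));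
  ((Negz 19), (ZMal (V 0) (Mu (V 3) (Mu (V 5) (V 2))) (V 1) (V 4)));
  ((Posz 30), (ZMal (V 0) (Mu (V 3) (Mu (V 4) (V 2))) (V 1) (V 5)));
  ((Posz 20), (ZMal (V 0) (Mu (V 5) (Mu (V 3) (V 2))) (V 1) (V 4)));
  ((Negz 9), (ZMal (V 0) (Mu (V 5) (Mu (V 4) (V 2))) (V 1) (V 3)));
  ((Negz 29), (ZMal (V 0) (Mu (V 4) (Mu (V 3) (V 2))) (V 1) (V 5)));
  ((Posz 10), (ZMal (V 0) (Mu (V 4) (Mu (V 5) (V 2))) (V 1) (V 3)));
  ((Negz 7), (ZMal (Mu (V 3) (V 0)) (V 2) (Mu (V 5) (V 1)) (V 4)));
  ((Posz 14), (ZMal (Mu (V 3) (V 0)) (V 2) (Mu (V 4) (V 1)) (V 5)));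
  ((Posz 10), (ZMal (Mu (V 5) (V 0)) (V 2) (Mu (V 3) (V 1)) (V 4)));
  ((Negz 3), (ZMal (Mu (V 5) (V 0)) (V 2) (Mu (V 4) (V 1)) (V 3)));
  ((Negz 14), (ZMal (Mu (V 4) (V 0)) (V 2) (Mu (V 3) (V 1)) (V 5)));
  ((Posz 3), (ZMal (Mu (V 4) (V 0)) (V 2) (Mu (V 5) (V 1)) (V 3)));
  ((Posz 22), (ZMal (Mu (V 3) (V 0)) (Mu (V 5) (V 2)) (V 1) (V 4)));
  ((Negz 7), (ZMal (Mu (V 3) (V 0)) (Mu (V 4) (V 2)) (V 1) (V 5)));
  ((Negz 3), (ZMal (Mu (V 5) (V 0)) (Mu (V 3) (V 2)) (V 1) (V 4)));
  ((Posz 18), (ZMal (Mu (V 5) (V 0)) (Mu (V 4) (V 2)) (V 1) (V 3)));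
  ((Negz 0), (ZMal (Mu (V 4) (V 0)) (Mu (V 3) (V 2)) (V 1) (V 5)));
  ((Negz 26), (ZMal (Mu (V 4) (V 0)) (Mu (V 5) (V 2)) (V 1) (V 3)));
  ((Posz 13), (ZMal (Mu (V 3) (Mu (V 5) (V 0))) (V 2) (V 1) (V 4)));
  ((Negz 24), (ZMal (Mu (V 3) (Mu (V 4) (V 0))) (V 2) (V 1) (V 5)));
  ((Posz 7), (ZMal (Mu (V 5) (Mu (V 3) (V 0))) (V 2) (V 1) (V 4)));
  ((Negz 6), (ZMal (Mu (V 5) (Mu (V 4) (V 0))) (V 2) (V 1) (V 3)));
  ((Posz 15), (ZMal (Mu (V 4) (Mu (V 3) (V 0))) (V 2) (V 1) (V 5)));
  ((Negz 2), (ZMal (Mu (V 4) (Mu (V 5) (V 0))) (V 2) (V 1) (V 3)));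
  ((Negz 4), (ZMal (V 0) (V 3) (Mu (V 5) (Mu (V 1) (V 2))) (V 4)));
  ((Negz 4), (ZMal (V 0) (V 3) (Mu (V 4) (Mu (V 1) (V 2))) (V 5)));
  ((Negz 16), (ZMal (V 0) (V 3) (Mu (V 1) (Mu (V 5) (V 2))) (V 4)));
  ((Posz 3), (ZMal (V 0) (V 3) (Mu (V 1) (Mu (V 4) (V 2))) (V 5)));
  ((Posz 7), (ZMal (V 0) (V 3) (Mu (V 2) (Mu (V 5) (V 1))) (V 4)));
  ((Negz 0), (ZMal (V 0) (V 3) (Mu (V 2) (Mu (V 4) (V 1))) (V 5)));
  ((Posz 15), (ZMal (V 0) (V 4) (Mu (V 3) (Mu (V 1) (V 2))) (V 5)));
  ((Posz 11), (ZMal (V 0) (V 4) (Mu (V 1) (Mu (V 3) (V 2))) (V 5)));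
  ((Negz 4), (ZMal (V 0) (V 4) (Mu (V 2) (Mu (V 3) (V 1))) (V 5)));
  ((Negz 29), (ZMal (Mu (V 3) (V 0)) (V 4) (Mu (V 1) (V 2)) (V 5)));
  ((Negz 4), (ZMal (Mu (V 3) (V 0)) (V 5) (Mu (V 1) (V 2)) (V 4)));
  ((Negz 29), (ZMal (Mu (V 5) (V 0)) (V 3) (Mu (V 1) (V 2)) (V 4)));
  ((Negz 14), (ZMal (Mu (V 5) (V 0)) (V 4) (Mu (V 1) (V 2)) (V 3)));
  ((Posz 35), (ZMal (Mu (V 4) (V 0)) (V 3) (Mu (V 1) (V 2)) (V 5)));
  ((Posz 15), (ZMal (Mu (V 4) (V 0)) (V 5) (Mu (V 1) (V 2)) (V 3)));
  ((Posz 17), (ZMal (Mu (V 3) (V 0)) (V 4) (V 1) (Mu (V 5) (V 2))));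
  ((Negz 2), (ZMal (Mu (V 3) (V 0)) (V 5) (V 1) (Mu (V 4) (V 2))));
  ((Posz 3), (ZMal (Mu (V 5) (V 0)) (V 3) (V 1) (Mu (V 4) (V 2))));
  ((Posz 11), (ZMal (Mu (V 5) (V 0)) (V 4) (V 1) (Mu (V 3) (V 2))));
  ((Negz 16), (ZMal (Mu (V 4) (V 0)) (V 3) (V 1) (Mu (V 5) (V 2))));
  ((Negz 10), (ZMal (Mu (V 4) (V 0)) (V 5) (V 1) (Mu (V 3) (V 2))));
  ((Posz 7), (ZMal (Mu (V 3) (V 0)) (V 4) (Mu (V 5) (V 1)) (V 2)));
  ((Negz 0), (ZMal (Mu (V 3) (V 0)) (V 5) (Mu (V 4) (V 1)) (V 2)));
  ((Posz 1), (ZMal (Mu (V 5) (V 0)) (V 3) (Mu (V 4) (V 1)) (V 2)));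
  ((Posz 5), (ZMal (Mu (V 5) (V 0)) (V 4) (Mu (V 3) (V 1)) (V 2)));
  ((Negz 6), (ZMal (Mu (V 4) (V 0)) (V 3) (Mu (V 5) (V 1)) (V 2)));
  ((Negz 4), (ZMal (Mu (V 4) (V 0)) (V 5) (Mu (V 3) (V 1)) (V 2)));
  ((Posz 30), (ZMal (Mu (V 3) (Mu (V 5) (V 0))) (V 4) (V 1) (V 2)));
  ((Negz 34), (ZMal (Mu (V 3) (Mu (V 4) (V 0))) (V 5) (V 1) (V 2)));
  ((Negz 19), (ZMal (Mu (V 5) (Mu (V 3) (V 0))) (V 4) (V 1) (V 2)));
  ((Posz 15), (ZMal (Mu (V 5) (Mu (V 4) (V 0))) (V 3) (V 1) (V 2)));
  ((Posz 30), (ZMal (Mu (V 4) (Mu (V 3) (V 0))) (V 5) (V 1) (V 2)));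
  ((Negz 19), (ZMal (Mu (V 4) (Mu (V 5) (V 0))) (V 3) (V 1) (V 2)));
  ((Negz 20), (ZMal (Mu (V 0) (V 2)) (V 3) (V 4) (Mu (V 5) (V 1))));
  ((Posz 21), (ZMal (Mu (V 0) (V 2)) (V 3) (V 5) (Mu (V 4) (V 1))));
  ((Negz 20), (ZMal (Mu (V 0) (V 2)) (V 4) (V 5) (Mu (V 3) (V 1))));
  ((Negz 8), (ZMal (Mu (V 3) (Mu (V 0) (V 2))) (V 4) (V 5) (V 1)));
  ((Posz 3), (ZMal (Mu (V 5) (Mu (V 0) (V 2))) (V 3) (V 4) (V 1)));
  ((Posz 3), (ZMal (Mu (V 4) (Mu (V 0) (V 2))) (V 3) (V 5) (V 1)));
  ((Posz 25), (ZMal (Mu (V 0) (Mu (V 3) (V 2))) (V 4) (V 5) (V 1)));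
  ((Posz 5), (ZMal (Mu (V 0) (Mu (V 5) (V 2))) (V 3) (V 4) (V 1)));
  ((Negz 14), (ZMal (Mu (V 0) (Mu (V 4) (V 2))) (V 3) (V 5) (V 1)));
  ((Posz 5), (ZMal (Mu (V 2) (Mu (V 3) (V 0))) (V 4) (V 5) (V 1)));
  ((Negz 24), (ZMal (Mu (V 2) (Mu (V 5) (V 0))) (V 3) (V 4) (V 1)));
  ((Posz 10), (ZMal (Mu (V 2) (Mu (V 4) (V 0))) (V 3) (V 5) (V 1)));
  ((Posz 30), (ZMal (V 0) (V 2) (V 3) (Mu (V 5) (Mu (V 4) (V 1)))));
  ((Negz 29), (ZMal (V 0) (V 2) (V 3) (Mu (V 4) (Mu (V 5) (V 1)))));
  ((Posz 24), (ZMal (V 0) (V 2) (V 4) (Mu (V 3) (Mu (V 5) (V 1)))));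
  ((Negz 23), (ZMal (V 0) (V 2) (V 4) (Mu (V 5) (Mu (V 3) (V 1)))));
  ((Negz 17), (ZMal (V 0) (V 2) (V 5) (Mu (V 3) (Mu (V 4) (V 1)))));
  ((Posz 18), (ZMal (V 0) (V 2) (V 5) (Mu (V 4) (Mu (V 3) (V 1)))));
  ((Negz 29), (ZMal (V 0) (Mu (V 3) (V 2)) (V 4) (Mu (V 5) (V 1))));
  ((Posz 20), (ZMal (V 0) (Mu (V 3) (V 2)) (V 5) (Mu (V 4) (V 1))));
  ((Negz 19), (ZMal (V 0) (Mu (V 5) (V 2)) (V 3) (Mu (V 4) (V 1))));
  ((Posz 10), (ZMal (V 0) (Mu (V 5) (V 2)) (V 4) (Mu (V 3) (V 1))));
  ((Posz 30), (ZMal (V 0) (Mu (V 4) (V 2)) (V 3) (Mu (V 5) (V 1))));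
  ((Negz 9), (ZMal (V 0) (Mu (V 4) (V 2)) (V 5) (Mu (V 3) (V 1))));
  ((Negz 14), (ZMal (Mu (V 3) (V 0)) (V 2) (V 4) (Mu (V 5) (V 1))));
  ((Posz 15), (ZMal (Mu (V 3) (V 0)) (V 2) (V 5) (Mu (V 4) (V 1))));
  ((Negz 24), (ZMal (Mu (V 5) (V 0)) (V 2) (V 3) (Mu (V 4) (V 1))));
  ((Posz 25), (ZMal (Mu (V 5) (V 0)) (V 2) (V 4) (Mu (V 3) (V 1))));
  ((Posz 20), (ZMal (Mu (V 4) (V 0)) (V 2) (V 3) (Mu (V 5) (V 1))));
  ((Negz 19), (ZMal (Mu (V 4) (V 0)) (V 2) (V 5) (Mu (V 3) (V 1))));
  ((Posz 10), (ZMal (Mu (V 3) (V 0)) (Mu (V 5) (V 2)) (V 4) (V 1)));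
  ((Negz 9), (ZMal (Mu (V 3) (V 0)) (Mu (V 4) (V 2)) (V 5) (V 1)));
  ((Negz 9), (ZMal (Mu (V 5) (V 0)) (Mu (V 3) (V 2)) (V 4) (V 1)));
  ((Posz 10), (ZMal (Mu (V 5) (V 0)) (Mu (V 4) (V 2)) (V 3) (V 1)));
  ((Posz 10), (ZMal (Mu (V 4) (V 0)) (Mu (V 3) (V 2)) (V 5) (V 1)));
  ((Negz 9), (ZMal (Mu (V 4) (V 0)) (Mu (V 5) (V 2)) (V 3) (V 1)));
  ((Posz 23), (ZMal (Mu (V 3) (Mu (V 5) (V 0))) (V 2) (V 4) (V 1)));
  ((Negz 41), (ZMal (Mu (V 3) (Mu (V 4) (V 0))) (V 2) (V 5) (V 1)));
  ((Negz 12), (ZMal (Mu (V 5) (Mu (V 3) (V 0))) (V 2) (V 4) (V 1)));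
  ((Negz 5), (ZMal (Mu (V 5) (Mu (V 4) (V 0))) (V 2) (V 3) (V 1)));
  ((Posz 37), (ZMal (Mu (V 4) (Mu (V 3) (V 0))) (V 2) (V 5) (V 1)));
  ((Posz 1), (ZMal (Mu (V 4) (Mu (V 5) (V 0))) (V 2) (V 3) (V 1)));
  ((Negz 4), (ZMal (V 0) (V 3) (V 4) (Mu (V 5) (Mu (V 1) (V 2)))));
  ((Negz 16), (ZMal (V 0) (V 3) (V 4) (Mu (V 1) (Mu (V 5) (V 2)))));
  ((Posz 7), (ZMal (V 0) (V 3) (V 4) (Mu (V 2) (Mu (V 5) (V 1)))));
  ((Negz 4), (ZMal (V 0) (V 3) (V 5) (Mu (V 4) (Mu (V 1) (V 2)))));
  ((Posz 3), (ZMal (V 0) (V 3) (V 5) (Mu (V 1) (Mu (V 4) (V 2)))));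
  ((Negz 0), (ZMal (V 0) (V 3) (V 5) (Mu (V 2) (Mu (V 4) (V 1)))));
  ((Posz 15), (ZMal (V 0) (V 4) (V 5) (Mu (V 3) (Mu (V 1) (V 2)))));
  ((Posz 11), (ZMal (V 0) (V 4) (V 5) (Mu (V 1) (Mu (V 3) (V 2)))));
  ((Negz 4), (ZMal (V 0) (V 4) (V 5) (Mu (V 2) (Mu (V 3) (V 1)))));
  ((Negz 24), (ZMal (Mu (V 3) (V 0)) (V 4) (V 5) (Mu (V 1) (V 2))));
  ((Negz 34), (ZMal (Mu (V 5) (V 0)) (V 3) (V 4) (Mu (V 1) (V 2))));
  ((Posz 30), (ZMal (Mu (V 4) (V 0)) (V 3) (V 5) (Mu (V 1) (V 2))));
  ((Posz 42), (ZR (ZN 0 3 4) (Mu (V 5) (Mu (V 1) (V 2)))));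
  ((Negz 41), (ZR (ZN 0 3 4) (Mu (V 1) (Mu (V 5) (V 2)))));
  ((Posz 10), (ZR (ZN 0 3 4) (Mu (V 2) (Mu (V 5) (V 1)))));
  ((Negz 49), (ZR (ZN 0 3 5) (Mu (V 4) (Mu (V 1) (V 2)))));
  ((Posz 18), (ZR (ZN 0 3 5) (Mu (V 1) (Mu (V 4) (V 2)))));
  ((Negz 21), (ZR (ZN 0 3 5) (Mu (V 2) (Mu (V 4) (V 1)))));
  ((Posz 46), (ZR (ZN 0 4 5) (Mu (V 3) (Mu (V 1) (V 2)))));
  ((Posz 6), (ZR (ZN 0 4 5) (Mu (V 1) (Mu (V 3) (V 2)))));
  ((Posz 22), (ZR (ZN 0 4 5) (Mu (V 2) (Mu (V 3) (V 1)))));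
  ((Posz 30), (ZR (ZMal (V 0) (V 3) (V 4) (V 5)) (Mu (V 1) (V 2))));
  ((Posz 50), (ZR (ZMal (V 0) (V 3) (V 5) (V 4)) (Mu (V 1) (V 2))));
  ((Negz 25), (ZR (ZMal (V 0) (V 4) (V 3) (V 5)) (Mu (V 1) (V 2))));
  ((Negz 35), (ZR (ZMal (V 0) (V 4) (V 5) (V 3)) (Mu (V 1) (V 2))));
  ((Posz 108), (ZR (ZR (ZN 0 3 4) (V 5)) (Mu (V 1) (V 2))));
  ((Posz 42), (ZR (ZN 1 3 4) (Mu (V 5) (Mu (V 0) (V 2)))));
  ((Negz 17), (ZR (ZN 1 3 4) (Mu (V 0) (Mu (V 5) (V 2)))));
  ((Posz 18), (ZR (ZN 1 3 4) (Mu (V 2) (Mu (V 5) (V 0)))));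
  ((Negz 41), (ZR (ZN 1 3 5) (Mu (V 4) (Mu (V 0) (V 2)))));
  ((Posz 14), (ZR (ZN 1 3 5) (Mu (V 0) (Mu (V 4) (V 2)))));
  ((Negz 33), (ZR (ZN 1 3 5) (Mu (V 2) (Mu (V 4) (V 0)))));
  ((Posz 42), (ZR (ZN 1 4 5) (Mu (V 3) (Mu (V 0) (V 2)))));
  ((Negz 9), (ZR (ZN 1 4 5) (Mu (V 0) (Mu (V 3) (V 2)))));
  ((Posz 50), (ZR (ZN 1 4 5) (Mu (V 2) (Mu (V 3) (V 0)))));
  ((Posz 54), (ZR (ZMal (V 1) (V 3) (V 4) (V 5)) (Mu (V 0) (V 2))));
  ((Posz 42), (ZR (ZMal (V 1) (V 3) (V 5) (V 4)) (Mu (V 0) (V 2))));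
  ((Negz 53), (ZR (ZMal (V 1) (V 4) (V 3) (V 5)) (Mu (V 0) (V 2))));
  ((Negz 47), (ZR (ZMal (V 1) (V 4) (V 5) (V 3)) (Mu (V 0) (V 2))));
  ((Posz 144), (ZR (ZR (ZN 1 3 4) (V 5)) (Mu (V 0) (V 2))));
  ((Negz 55), (ZR (ZN 2 3 4) (Mu (V 5) (Mu (V 0) (V 1)))));
  ((Posz 10), (ZR (ZN 2 3 4) (Mu (V 0) (Mu (V 5) (V 1)))));
  ((Negz 49), (ZR (ZN 2 3 4) (Mu (V 1) (Mu (V 5) (V 0)))));
  ((Posz 56), (ZR (ZN 2 3 5) (Mu (V 4) (Mu (V 0) (V 1)))));
  ((Negz 9), (ZR (ZN 2 3 5) (Mu (V 0) (Mu (V 4) (V 1)))));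
  ((Posz 30), (ZR (ZN 2 3 5) (Mu (V 1) (Mu (V 4) (V 0)))));
  ((Negz 55), (ZR (ZN 2 4 5) (Mu (V 3) (Mu (V 0) (V 1)))));
  ((Posz 10), (ZR (ZN 2 4 5) (Mu (V 0) (Mu (V 3) (V 1)))));
  ((Negz 9), (ZR (ZN 2 4 5) (Mu (V 1) (Mu (V 3) (V 0)))));
  ((Negz 29), (ZR (ZMal (V 2) (V 3) (V 4) (V 5)) (Mu (V 0) (V 1))));
  ((Negz 49), (ZR (ZMal (V 2) (V 3) (V 5) (V 4)) (Mu (V 0) (V 1))));
  ((Posz 30), (ZR (ZMal (V 2) (V 4) (V 3) (V 5)) (Mu (V 0) (V 1))));
  ((Posz 40), (ZR (ZMal (V 2) (V 4) (V 5) (V 3)) (Mu (V 0) (V 1))));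
  ((Negz 119), (ZR (ZR (ZN 2 3 4) (V 5)) (Mu (V 0) (V 1))));
  ((Posz 22), (ZR (ZMal (V 0) (V 1) (V 3) (V 4)) (Mu (V 5) (V 2))));
  ((Negz 7), (ZR (ZMal (V 0) (V 1) (V 3) (V 5)) (Mu (V 4) (V 2))));
  ((Posz 26), (ZR (ZMal (V 0) (V 1) (V 4) (V 3)) (Mu (V 5) (V 2))));
  ((Negz 5), (ZR (ZMal (V 0) (V 1) (V 4) (V 5)) (Mu (V 3) (V 2))));
  ((Negz 15), (ZR (ZMal (V 0) (V 1) (V 5) (V 3)) (Mu (V 4) (V 2))));
  ((Posz 6), (ZR (ZMal (V 0) (V 1) (V 5) (V 4)) (Mu (V 3) (V 2))));
  ((Posz 43), (ZR (ZMal (V 0) (V 3) (V 1) (V 4)) (Mu (V 5) (V 2))));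
  ((Negz 18), (ZR (ZMal (V 0) (V 3) (V 1) (V 5)) (Mu (V 4) (V 2))));
  ((Negz 4), (ZR (ZMal (V 0) (V 4) (V 1) (V 3)) (Mu (V 5) (V 2))));
  ((Posz 5), (ZR (ZMal (V 0) (V 4) (V 1) (V 5)) (Mu (V 3) (V 2))));
  ((Posz 15), (ZR (ZMal (V 0) (V 5) (V 1) (V 3)) (Mu (V 4) (V 2))));
  ((Negz 14), (ZR (ZMal (V 0) (V 5) (V 1) (V 4)) (Mu (V 3) (V 2))));
  ((Posz 48), (ZR (ZMal (V 0) (V 3) (V 4) (V 1)) (Mu (V 5) (V 2))));
  ((Negz 23), (ZR (ZMal (V 0) (V 3) (V 5) (V 1)) (Mu (V 4) (V 2))));
  ((Posz 26), (ZR (ZR (ZN 0 3 4) (V 1)) (Mu (V 5) (V 2))));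
  ((Negz 13), (ZR (ZR (ZN 0 3 5) (V 1)) (Mu (V 4) (V 2))));
  ((Posz 14), (ZR (ZR (ZN 0 4 5) (V 1)) (Mu (V 3) (V 2))));
  ((Negz 33), (ZR (ZR (ZN 1 3 4) (V 0)) (Mu (V 5) (V 2))));
  ((Posz 30), (ZR (ZR (ZN 1 3 5) (V 0)) (Mu (V 4) (V 2))));
  ((Negz 25), (ZR (ZR (ZN 1 4 5) (V 0)) (Mu (V 3) (V 2))));
  ((Posz 13), (ZR (ZMal (V 0) (Mu (V 3) (V 1)) (V 4) (V 5)) (V 2)));
  ((Posz 5), (ZR (ZMal (V 0) (Mu (V 5) (V 1)) (V 3) (V 4)) (V 2)));
  ((Negz 8), (ZR (ZMal (V 0) (Mu (V 4) (V 1)) (V 3) (V 5)) (V 2)));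
  ((Negz 44), (ZR (ZMal (Mu (V 3) (V 0)) (V 1) (V 4) (V 5)) (V 2)));
  ((Negz 44), (ZR (ZMal (Mu (V 5) (V 0)) (V 1) (V 3) (V 4)) (V 2)));
  ((Posz 45), (ZR (ZMal (Mu (V 4) (V 0)) (V 1) (V 3) (V 5)) (V 2)));
  ((Posz 5), (ZR (ZMal (V 0) (V 3) (Mu (V 5) (V 1)) (V 4)) (V 2)));
  ((Negz 8), (ZR (ZMal (V 0) (V 3) (Mu (V 4) (V 1)) (V 5)) (V 2)));
  ((Posz 13), (ZR (ZMal (V 0) (V 4) (Mu (V 3) (V 1)) (V 5)) (V 2)));
  ((Negz 36), (ZR (ZMal (Mu (V 3) (V 0)) (V 4) (V 1) (V 5)) (V 2)));
  ((Negz 17), (ZR (ZMal (Mu (V 3) (V 0)) (V 5) (V 1) (V 4)) (V 2)));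
  ((Negz 6), (ZR (ZMal (Mu (V 5) (V 0)) (V 3) (V 1) (V 4)) (V 2)));
  ((Negz 47), (ZR (ZMal (Mu (V 5) (V 0)) (V 4) (V 1) (V 3)) (V 2)));
  ((Posz 27), (ZR (ZMal (Mu (V 4) (V 0)) (V 3) (V 1) (V 5)) (V 2)));
  ((Posz 38), (ZR (ZMal (Mu (V 4) (V 0)) (V 5) (V 1) (V 3)) (V 2)));
  ((Posz 5), (ZR (ZMal (V 0) (V 3) (V 4) (Mu (V 5) (V 1))) (V 2)));
  ((Negz 8), (ZR (ZMal (V 0) (V 3) (V 5) (Mu (V 4) (V 1))) (V 2)));
  ((Posz 13), (ZR (ZMal (V 0) (V 4) (V 5) (Mu (V 3) (V 1))) (V 2)));
  ((Negz 44), (ZR (ZMal (Mu (V 3) (V 0)) (V 4) (V 5) (V 1)) (V 2)));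
  ((Negz 44), (ZR (ZMal (Mu (V 5) (V 0)) (V 3) (V 4) (V 1)) (V 2)));
  ((Posz 45), (ZR (ZMal (Mu (V 4) (V 0)) (V 3) (V 5) (V 1)) (V 2)));
  ((Posz 6), (ZR (ZR (ZN 0 3 4) (Mu (V 5) (V 1))) (V 2)));
  ((Negz 17), (ZR (ZR (ZN 0 3 5) (Mu (V 4) (V 1))) (V 2)));
  ((Posz 42), (ZR (ZR (ZN 0 4 5) (Mu (V 3) (V 1))) (V 2)));
  ((Posz 4), (ZR (ZR (ZMal (V 0) (V 3) (V 4) (V 5)) (V 1)) (V 2)));
  ((Posz 44), (ZR (ZR (ZMal (V 0) (V 3) (V 5) (V 4)) (V 1)) (V 2)));
  ((Negz 27), (ZR (ZR (ZMal (V 0) (V 4) (V 3) (V 5)) (V 1)) (V 2)));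
  ((Negz 47), (ZR (ZR (ZMal (V 0) (V 4) (V 5) (V 3)) (V 1)) (V 2)));
  ((Posz 72), (ZR (ZR (ZR (ZN 0 3 4) (V 5)) (V 1)) (V 2)));
  ((Negz 53), (ZR (ZR (ZN 1 3 4) (Mu (V 5) (V 0))) (V 2)));
  ((Posz 50), (ZR (ZR (ZN 1 3 5) (Mu (V 4) (V 0))) (V 2)));
  ((Negz 45), (ZR (ZR (ZN 1 4 5) (Mu (V 3) (V 0))) (V 2)));
  ((Posz 52), (ZR (ZR (ZR (ZN 0 3 4) (V 1)) (V 5)) (V 2)));
  ((Negz 19), (ZR (ZR (ZR (ZN 0 3 5) (V 1)) (V 4)) (V 2)));
  ((Negz 11), (ZR (ZMal (V 0) (V 2) (V 3) (V 4)) (Mu (V 5) (V 1))));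
  ((Posz 6), (ZR (ZMal (V 0) (V 2) (V 3) (V 5)) (Mu (V 4) (V 1))));
  ((Posz 12), (ZR (ZMal (V 0) (V 2) (V 4) (V 3)) (Mu (V 5) (V 1))));
  ((Negz 5), (ZR (ZMal (V 0) (V 2) (V 5) (V 3)) (Mu (V 4) (V 1))));
  ((Negz 14), (ZR (ZMal (V 0) (V 3) (V 2) (V 4)) (Mu (V 5) (V 1))));
  ((Posz 15), (ZR (ZMal (V 0) (V 3) (V 2) (V 5)) (Mu (V 4) (V 1))));
  ((Posz 5), (ZR (ZMal (V 0) (V 4) (V 2) (V 3)) (Mu (V 5) (V 1))));
  ((Negz 4), (ZR (ZMal (V 0) (V 4) (V 2) (V 5)) (Mu (V 3) (V 1))));
  ((Posz 5), (ZR (ZMal (V 0) (V 5) (V 2) (V 3)) (Mu (V 4) (V 1))));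
  ((Negz 4), (ZR (ZMal (V 0) (V 5) (V 2) (V 4)) (Mu (V 3) (V 1))));
  ((Posz 24), (ZR (ZR (ZN 0 3 4) (V 2)) (Mu (V 5) (V 1))));
  ((Negz 3), (ZR (ZR (ZN 0 3 5) (V 2)) (Mu (V 4) (V 1))));
  ((Negz 15), (ZR (ZR (ZN 0 4 5) (V 2)) (Mu (V 3) (V 1))));
  ((Posz 8), (ZR (ZR (ZN 2 3 4) (V 0)) (Mu (V 5) (V 1))));
  ((Negz 3), (ZR (ZR (ZN 2 3 5) (V 0)) (Mu (V 4) (V 1))));
  ((Posz 7), (ZR (ZMal (Mu (V 3) (V 0)) (V 4) (V 2) (V 5)) (V 1)));
  ((Posz 7), (ZR (ZMal (Mu (V 3) (V 0)) (V 5) (V 2) (V 4)) (V 1)));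
  ((Negz 6), (ZR (ZMal (Mu (V 5) (V 0)) (V 3) (V 2) (V 4)) (V 1)));
  ((Posz 21), (ZR (ZMal (Mu (V 5) (V 0)) (V 4) (V 2) (V 3)) (V 1)));
  ((Negz 6), (ZR (ZMal (Mu (V 4) (V 0)) (V 3) (V 2) (V 5)) (V 1)));
  ((Negz 20), (ZR (ZMal (Mu (V 4) (V 0)) (V 5) (V 2) (V 3)) (V 1)));
  ((Posz 44), (ZR (ZR (ZN 0 3 4) (Mu (V 5) (V 2))) (V 1)));
  ((Negz 27), (ZR (ZR (ZN 0 3 5) (Mu (V 4) (V 2))) (V 1)));
  ((Posz 8), (ZR (ZR (ZMal (V 0) (V 3) (V 4) (V 5)) (V 2)) (V 1)));
  ((Negz 3), (ZR (ZR (ZMal (V 0) (V 4) (V 3) (V 5)) (V 2)) (V 1)));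
  ((Posz 48), (ZR (ZR (ZN 2 3 4) (Mu (V 5) (V 0))) (V 1)));
  ((Negz 23), (ZR (ZR (ZN 2 3 5) (Mu (V 4) (V 0))) (V 1)));
  ((Posz 20), (ZR (ZMal (V 1) (V 2) (V 3) (V 4)) (Mu (V 5) (V 0))));
  ((Negz 9), (ZR (ZMal (V 1) (V 2) (V 3) (V 5)) (Mu (V 4) (V 0))));
  ((Negz 19), (ZR (ZMal (V 1) (V 2) (V 4) (V 3)) (Mu (V 5) (V 0))));
  ((Posz 10), (ZR (ZMal (V 1) (V 2) (V 5) (V 3)) (Mu (V 4) (V 0))));
  ((Negz 11), (ZR (ZR (ZN 1 3 4) (V 2)) (Mu (V 5) (V 0))));
  ((Negz 3), (ZR (ZR (ZN 1 3 5) (V 2)) (Mu (V 4) (V 0))));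
  ((Posz 20), (ZR (ZR (ZN 1 4 5) (V 2)) (Mu (V 3) (V 0))));
  ((Posz 8), (ZR (ZR (ZN 1 3 4) (Mu (V 5) (V 2))) (V 0)));
  ((Negz 3), (ZR (ZR (ZN 1 3 5) (Mu (V 4) (V 2))) (V 0)))].

Definition certG : seq (int * zp) := [::
  ((Negz 11), (ZMal (V 0) (V 1) (V 2) (V 5)));
  ((Negz 3), (ZMal (V 0) (V 2) (V 1) (V 5)));
  ((Posz 20), (ZMal (V 0) (V 5) (V 1) (V 2)));
  ((Posz 12), (ZMal (V 0) (V 2) (V 5) (V 1)));
  ((Negz 3), (ZMal (Mu (V 0) (V 1)) (V 2) (V 4) (V 5)));
  ((Negz 9), (ZMal (Mu (V 0) (V 1)) (V 4) (V 2) (V 5)));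
  ((Posz 6), (ZMal (Mu (V 0) (V 1)) (V 5) (V 2) (V 4)));
  ((Negz 3), (ZMal (Mu (V 0) (V 1)) (V 4) (V 5) (V 2)));
  ((Negz 7), (ZMal (V 0) (Mu (V 1) (V 2)) (V 4) (V 5)));
  ((Posz 24), (ZMal (V 0) (V 1) (Mu (V 5) (V 2)) (V 4)));
  ((Negz 23), (ZMal (V 0) (V 1) (Mu (V 4) (V 2)) (V 5)));
  ((Posz 12), (ZMal (V 0) (Mu (V 5) (V 1)) (V 2) (V 4)));
  ((Negz 11), (ZMal (V 0) (Mu (V 4) (V 1)) (V 2) (V 5)));
  ((Negz 34), (ZMal (Mu (V 5) (V 0)) (V 1) (V 2) (V 4)));
  ((Posz 35), (ZMal (Mu (V 4) (V 0)) (V 1) (V 2) (V 5)));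
  ((Posz 28), (ZMal (V 0) (V 1) (V 4) (Mu (V 5) (V 2))));
  ((Negz 27), (ZMal (V 0) (V 1) (V 5) (Mu (V 4) (V 2))));
  ((Negz 13), (ZMal (V 0) (Mu (V 5) (V 1)) (V 4) (V 2)));
  ((Posz 14), (ZMal (V 0) (Mu (V 4) (V 1)) (V 5) (V 2)));
  ((Negz 8), (ZMal (Mu (V 5) (V 0)) (V 1) (V 4) (V 2)));
  ((Posz 13), (ZMal (Mu (V 4) (V 0)) (V 1) (V 5) (V 2)));
  ((Negz 5), (ZMal (Mu (V 0) (V 2)) (V 4) (V 1) (V 5)));
  ((Posz 6), (ZMal (Mu (V 0) (V 2)) (V 5) (V 1) (V 4)));
  ((Negz 1), (ZMal (V 0) (V 2) (Mu (V 5) (V 1)) (V 4)));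
  ((Posz 2), (ZMal (V 0) (V 2) (Mu (V 4) (V 1)) (V 5)));
  ((Posz 38), (ZMal (V 0) (Mu (V 5) (V 2)) (V 1) (V 4)));
  ((Negz 37), (ZMal (V 0) (Mu (V 4) (V 2)) (V 1) (V 5)));
  ((Negz 23), (ZMal (Mu (V 5) (V 0)) (V 2) (V 1) (V 4)));
  ((Posz 28), (ZMal (Mu (V 4) (V 0)) (V 2) (V 1) (V 5)));
  ((Negz 17), (ZMal (V 0) (V 4) (Mu (V 1) (V 2)) (V 5)));
  ((Posz 10), (ZMal (V 0) (V 5) (Mu (V 1) (V 2)) (V 4)));
  ((Posz 14), (ZMal (V 0) (V 4) (V 1) (Mu (V 5) (V 2))));
  ((Negz 13), (ZMal (V 0) (V 5) (V 1) (Mu (V 4) (V 2))));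
  ((Posz 6), (ZMal (V 0) (V 4) (Mu (V 5) (V 1)) (V 2)));
  ((Negz 5), (ZMal (V 0) (V 5) (Mu (V 4) (V 1)) (V 2)));
  ((Negz 22), (ZMal (Mu (V 5) (V 0)) (V 4) (V 1) (V 2)));
  ((Posz 23), (ZMal (Mu (V 4) (V 0)) (V 5) (V 1) (V 2)));
  ((Posz 2), (ZMal (V 0) (V 2) (V 4) (Mu (V 5) (V 1))));
  ((Negz 1), (ZMal (V 0) (V 2) (V 5) (Mu (V 4) (V 1))));
  ((Posz 8), (ZMal (V 0) (Mu (V 5) (V 2)) (V 4) (V 1)));
  ((Negz 7), (ZMal (V 0) (Mu (V 4) (V 2)) (V 5) (V 1)));
  ((Negz 29), (ZMal (Mu (V 5) (V 0)) (V 2) (V 4) (V 1)));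
  ((Posz 30), (ZMal (Mu (V 4) (V 0)) (V 2) (V 5) (V 1)));
  ((Negz 7), (ZMal (V 0) (V 4) (V 5) (Mu (V 1) (V 2))));
  ((Negz 43), (ZR (ZN 0 4 5) (Mu (V 1) (V 2))));
  ((Posz 24), (ZR (ZN 1 4 5) (Mu (V 0) (V 2))));
  ((Posz 40), (ZR (ZN 2 4 5) (Mu (V 0) (V 1))));
  ((Posz 24), (ZR (ZMal (V 0) (V 1) (V 4) (V 5)) (V 2)));
  ((Negz 19), (ZR (ZMal (V 0) (V 1) (V 5) (V 4)) (V 2)));
  ((Posz 4), (ZR (ZMal (V 0) (V 4) (V 1) (V 5)) (V 2)));
  ((Posz 4), (ZR (ZMal (V 0) (V 4) (V 5) (V 1)) (V 2)));
  ((Posz 20), (ZR (ZR (ZN 0 4 5) (V 1)) (V 2)));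
  ((Posz 20), (ZR (ZR (ZN 1 4 5) (V 0)) (V 2)));
  ((Posz 12), (ZR (ZMal (V 0) (V 2) (V 4) (V 5)) (V 1)));
  ((Negz 11), (ZR (ZMal (V 0) (V 2) (V 5) (V 4)) (V 1)));
  ((Negz 3), (ZR (ZMal (V 0) (V 4) (V 2) (V 5)) (V 1)));
  ((Posz 4), (ZR (ZMal (V 0) (V 5) (V 2) (V 4)) (V 1)));
  ((Posz 24), (ZR (ZR (ZN 0 4 5) (V 2)) (V 1)));
  ((Posz 12), (ZR (ZR (ZN 2 4 5) (V 0)) (V 1)));
  ((Negz 19), (ZR (ZMal (V 1) (V 2) (V 4) (V 5)) (V 0)));
  ((Posz 20), (ZR (ZMal (V 1) (V 2) (V 5) (V 4)) (V 0)));
  ((Negz 19), (ZR (ZR (ZN 1 4 5) (V 2)) (V 0)));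
  ((Negz 11), (ZR (ZR (ZN 2 4 5) (V 1)) (V 0)));
  ((Posz 10), (ZMal (Mu (V 5) (Mu (V 0) (V 1))) (V 2) (V 3) (V 5)));
  ((Negz 9), (ZMal (Mu (V 4) (Mu (V 0) (V 1))) (V 2) (V 4) (V 5)));
  ((Negz 9), (ZMal (Mu (V 0) (Mu (V 5) (V 1))) (V 2) (V 3) (V 5)));
  ((Posz 10), (ZMal (Mu (V 0) (Mu (V 4) (V 1))) (V 2) (V 4) (V 5)));
  ((Negz 4), (ZMal (Mu (V 1) (Mu (V 5) (V 0))) (V 2) (V 3) (V 5)));
  ((Posz 5), (ZMal (Mu (V 1) (Mu (V 4) (V 0))) (V 2) (V 4) (V 5)));
  ((Posz 10), (ZMal (Mu (V 0) (V 1)) (V 4) (Mu (V 5) (V 2)) (V 4)));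
  ((Negz 9), (ZMal (Mu (V 0) (V 1)) (V 4) (Mu (V 4) (V 2)) (V 5)));
  ((Posz 10), (ZMal (Mu (V 0) (V 1)) (V 5) (Mu (V 3) (V 2)) (V 5)));
  ((Negz 9), (ZMal (Mu (V 0) (V 1)) (V 5) (Mu (V 5) (V 2)) (V 3)));
  ((Posz 10), (ZMal (Mu (V 5) (Mu (V 0) (V 1))) (V 5) (V 2) (V 3)));
  ((Negz 9), (ZMal (Mu (V 4) (Mu (V 0) (V 1))) (V 5) (V 2) (V 4)));
  ((Negz 9), (ZMal (Mu (V 0) (Mu (V 5) (V 1))) (V 5) (V 2) (V 3)));
  ((Posz 10), (ZMal (Mu (V 0) (Mu (V 4) (V 1))) (V 5) (V 2) (V 4)));
  ((Negz 4), (ZMal (Mu (V 1) (Mu (V 5) (V 0))) (V 5) (V 2) (V 3)));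
  ((Posz 5), (ZMal (Mu (V 1) (Mu (V 4) (V 0))) (V 5) (V 2) (V 4)));
  ((Posz 10), (ZMal (Mu (V 5) (Mu (V 0) (V 1))) (V 3) (V 5) (V 2)));
  ((Negz 9), (ZMal (Mu (V 4) (Mu (V 0) (V 1))) (V 4) (V 5) (V 2)));
  ((Negz 9), (ZMal (Mu (V 0) (Mu (V 5) (V 1))) (V 3) (V 5) (V 2)));
  ((Posz 10), (ZMal (Mu (V 0) (Mu (V 4) (V 1))) (V 4) (V 5) (V 2)));
  ((Negz 4), (ZMal (Mu (V 1) (Mu (V 5) (V 0))) (V 3) (V 5) (V 2)));
  ((Posz 5), (ZMal (Mu (V 1) (Mu (V 4) (V 0))) (V 4) (V 5) (V 2)));
  ((Posz 6), (ZMal (Mu (V 5) (Mu (V 0) (V 2))) (V 1) (V 3) (V 5)));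
  ((Negz 5), (ZMal (Mu (V 4) (Mu (V 0) (V 2))) (V 1) (V 4) (V 5)));
  ((Negz 9), (ZMal (Mu (V 0) (Mu (V 5) (V 2))) (V 1) (V 3) (V 5)));
  ((Posz 10), (ZMal (Mu (V 0) (Mu (V 4) (V 2))) (V 1) (V 4) (V 5)));
  ((Negz 14), (ZMal (Mu (V 2) (Mu (V 5) (V 0))) (V 1) (V 3) (V 5)));
  ((Posz 15), (ZMal (Mu (V 2) (Mu (V 4) (V 0))) (V 1) (V 4) (V 5)));
  ((Negz 9), (ZMal (V 0) (Mu (V 5) (Mu (V 1) (V 2))) (V 3) (V 5)));
  ((Posz 10), (ZMal (V 0) (Mu (V 4) (Mu (V 1) (V 2))) (V 4) (V 5)));
  ((Negz 13), (ZMal (V 0) (Mu (V 1) (Mu (V 5) (V 2))) (V 3) (V 5)));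
  ((Posz 14), (ZMal (V 0) (Mu (V 1) (Mu (V 4) (V 2))) (V 4) (V 5)));
  ((Posz 6), (ZMal (V 0) (Mu (V 2) (Mu (V 5) (V 1))) (V 3) (V 5)));
  ((Negz 5), (ZMal (V 0) (Mu (V 2) (Mu (V 4) (V 1))) (V 4) (V 5)));
  ((Negz 4), (ZMal (Mu (V 5) (V 0)) (Mu (V 1) (V 2)) (V 3) (V 5)));
  ((Posz 5), (ZMal (Mu (V 4) (V 0)) (Mu (V 1) (V 2)) (V 4) (V 5)));
  ((Posz 10), (ZMal (V 0) (V 1) (Mu (V 3) (Mu (V 5) (V 2))) (V 5)));
  ((Negz 9), (ZMal (V 0) (V 1) (Mu (V 5) (Mu (V 3) (V 2))) (V 5)));
  ((Posz 10), (ZMal (V 0) (V 1) (Mu (V 5) (Mu (V 4) (V 2))) (V 4)));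
  ((Negz 9), (ZMal (V 0) (V 1) (Mu (V 4) (Mu (V 5) (V 2))) (V 4)));
  ((Posz 6), (ZMal (V 0) (Mu (V 3) (Mu (V 5) (V 1))) (V 2) (V 5)));
  ((Negz 5), (ZMal (V 0) (Mu (V 5) (Mu (V 3) (V 1))) (V 2) (V 5)));
  ((Posz 6), (ZMal (V 0) (Mu (V 5) (Mu (V 4) (V 1))) (V 2) (V 4)));
  ((Negz 5), (ZMal (V 0) (Mu (V 4) (Mu (V 5) (V 1))) (V 2) (V 4)));
  ((Negz 4), (ZMal (Mu (V 5) (V 0)) (V 1) (Mu (V 3) (V 2)) (V 5)));
  ((Posz 5), (ZMal (Mu (V 5) (V 0)) (V 1) (Mu (V 5) (V 2)) (V 3)));
  ((Negz 4), (ZMal (Mu (V 4) (V 0)) (V 1) (Mu (V 5) (V 2)) (V 4)));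
  ((Posz 5), (ZMal (Mu (V 4) (V 0)) (V 1) (Mu (V 4) (V 2)) (V 5)));
  ((Posz 5), (ZMal (Mu (V 5) (V 0)) (Mu (V 3) (V 1)) (V 2) (V 5)));
  ((Negz 4), (ZMal (Mu (V 5) (V 0)) (Mu (V 5) (V 1)) (V 2) (V 3)));
  ((Posz 5), (ZMal (Mu (V 4) (V 0)) (Mu (V 5) (V 1)) (V 2) (V 4)));
  ((Negz 4), (ZMal (Mu (V 4) (V 0)) (Mu (V 4) (V 1)) (V 2) (V 5)));
  ((Negz 18), (ZMal (Mu (V 3) (Mu (V 5) (V 0))) (V 1) (V 2) (V 5)));
  ((Posz 24), (ZMal (Mu (V 5) (Mu (V 3) (V 0))) (V 1) (V 2) (V 5)));
  ((Negz 4), (ZMal (Mu (V 5) (Mu (V 5) (V 0))) (V 1) (V 2) (V 3)));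
  ((Negz 18), (ZMal (Mu (V 5) (Mu (V 4) (V 0))) (V 1) (V 2) (V 4)));
  ((Posz 24), (ZMal (Mu (V 4) (Mu (V 5) (V 0))) (V 1) (V 2) (V 4)));
  ((Negz 4), (ZMal (Mu (V 4) (Mu (V 4) (V 0))) (V 1) (V 2) (V 5)));
  ((Posz 10), (ZMal (V 0) (V 1) (V 4) (Mu (V 5) (Mu (V 4) (V 2)))));
  ((Negz 9), (ZMal (V 0) (V 1) (V 4) (Mu (V 4) (Mu (V 5) (V 2)))));
  ((Posz 10), (ZMal (V 0) (V 1) (V 5) (Mu (V 3) (Mu (V 5) (V 2)))));
  ((Negz 9), (ZMal (V 0) (V 1) (V 5) (Mu (V 5) (Mu (V 3) (V 2)))));
  ((Negz 9), (ZMal (V 0) (Mu (V 3) (V 1)) (V 5) (Mu (V 5) (V 2))));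
  ((Posz 10), (ZMal (V 0) (Mu (V 5) (V 1)) (V 3) (Mu (V 5) (V 2))));
  ((Negz 9), (ZMal (V 0) (Mu (V 5) (V 1)) (V 4) (Mu (V 4) (V 2))));
  ((Posz 10), (ZMal (V 0) (Mu (V 4) (V 1)) (V 5) (Mu (V 4) (V 2))));
  ((Posz 14), (ZMal (Mu (V 3) (V 0)) (V 1) (V 5) (Mu (V 5) (V 2))));
  ((Negz 8), (ZMal (Mu (V 5) (V 0)) (V 1) (V 3) (Mu (V 5) (V 2))));
  ((Posz 14), (ZMal (Mu (V 5) (V 0)) (V 1) (V 4) (Mu (V 4) (V 2))));
  ((Negz 4), (ZMal (Mu (V 5) (V 0)) (V 1) (V 5) (Mu (V 3) (V 2))));
  ((Negz 4), (ZMal (Mu (V 4) (V 0)) (V 1) (V 4) (Mu (V 5) (V 2))));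
  ((Negz 8), (ZMal (Mu (V 4) (V 0)) (V 1) (V 5) (Mu (V 4) (V 2))));
  ((Posz 6), (ZMal (Mu (V 3) (V 0)) (Mu (V 5) (V 1)) (V 5) (V 2)));
  ((Posz 10), (ZMal (Mu (V 5) (V 0)) (Mu (V 3) (V 1)) (V 5) (V 2)));
  ((Negz 15), (ZMal (Mu (V 5) (V 0)) (Mu (V 5) (V 1)) (V 3) (V 2)));
  ((Posz 6), (ZMal (Mu (V 5) (V 0)) (Mu (V 4) (V 1)) (V 4) (V 2)));
  ((Posz 10), (ZMal (Mu (V 4) (V 0)) (Mu (V 5) (V 1)) (V 4) (V 2)));
  ((Negz 15), (ZMal (Mu (V 4) (V 0)) (Mu (V 4) (V 1)) (V 5) (V 2)));
  ((Negz 3), (ZMal (Mu (V 3) (Mu (V 5) (V 0))) (V 1) (V 5) (V 2)));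
  ((Posz 14), (ZMal (Mu (V 5) (Mu (V 3) (V 0))) (V 1) (V 5) (V 2)));
  ((Negz 9), (ZMal (Mu (V 5) (Mu (V 5) (V 0))) (V 1) (V 3) (V 2)));
  ((Posz 10), (ZMal (Mu (V 4) (Mu (V 5) (V 0))) (V 1) (V 4) (V 2)));
  ((Negz 9), (ZMal (Mu (V 4) (Mu (V 4) (V 0))) (V 1) (V 5) (V 2)));
  ((Posz 6), (ZMal (Mu (V 0) (V 2)) (V 4) (Mu (V 5) (V 1)) (V 4)));
  ((Negz 5), (ZMal (Mu (V 0) (V 2)) (V 4) (Mu (V 4) (V 1)) (V 5)));
  ((Posz 6), (ZMal (Mu (V 0) (V 2)) (V 5) (Mu (V 3) (V 1)) (V 5)));
  ((Negz 5), (ZMal (Mu (V 0) (V 2)) (V 5) (Mu (V 5) (V 1)) (V 3)));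
  ((Posz 6), (ZMal (Mu (V 5) (Mu (V 0) (V 2))) (V 5) (V 1) (V 3)));
  ((Negz 5), (ZMal (Mu (V 4) (Mu (V 0) (V 2))) (V 5) (V 1) (V 4)));
  ((Negz 9), (ZMal (Mu (V 0) (Mu (V 5) (V 2))) (V 5) (V 1) (V 3)));
  ((Posz 10), (ZMal (Mu (V 0) (Mu (V 4) (V 2))) (V 5) (V 1) (V 4)));
  ((Negz 14), (ZMal (Mu (V 2) (Mu (V 5) (V 0))) (V 5) (V 1) (V 3)));
  ((Posz 15), (ZMal (Mu (V 2) (Mu (V 4) (V 0))) (V 5) (V 1) (V 4)));
  ((Posz 6), (ZMal (V 0) (V 2) (Mu (V 3) (Mu (V 5) (V 1))) (V 5)));
  ((Negz 5), (ZMal (V 0) (V 2) (Mu (V 5) (Mu (V 3) (V 1))) (V 5)));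
  ((Posz 6), (ZMal (V 0) (V 2) (Mu (V 5) (Mu (V 4) (V 1))) (V 4)));
  ((Negz 5), (ZMal (V 0) (V 2) (Mu (V 4) (Mu (V 5) (V 1))) (V 4)));
  ((Posz 10), (ZMal (V 0) (Mu (V 3) (Mu (V 5) (V 2))) (V 1) (V 5)));
  ((Negz 9), (ZMal (V 0) (Mu (V 5) (Mu (V 3) (V 2))) (V 1) (V 5)));
  ((Posz 10), (ZMal (V 0) (Mu (V 5) (Mu (V 4) (V 2))) (V 1) (V 4)));
  ((Negz 9), (ZMal (V 0) (Mu (V 4) (Mu (V 5) (V 2))) (V 1) (V 4)));
  ((Posz 6), (ZMal (Mu (V 3) (V 0)) (V 2) (Mu (V 5) (V 1)) (V 5)));
  ((Negz 4), (ZMal (Mu (V 5) (V 0)) (V 2) (Mu (V 3) (V 1)) (V 5)));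
  ((Negz 0), (ZMal (Mu (V 5) (V 0)) (V 2) (Mu (V 5) (V 1)) (V 3)));
  ((Posz 6), (ZMal (Mu (V 5) (V 0)) (V 2) (Mu (V 4) (V 1)) (V 4)));
  ((Negz 4), (ZMal (Mu (V 4) (V 0)) (V 2) (Mu (V 5) (V 1)) (V 4)));
  ((Negz 0), (ZMal (Mu (V 4) (V 0)) (V 2) (Mu (V 4) (V 1)) (V 5)));
  ((Posz 14), (ZMal (Mu (V 3) (V 0)) (Mu (V 5) (V 2)) (V 1) (V 5)));
  ((Negz 4), (ZMal (Mu (V 5) (V 0)) (Mu (V 3) (V 2)) (V 1) (V 5)));
  ((Negz 8), (ZMal (Mu (V 5) (V 0)) (Mu (V 5) (V 2)) (V 1) (V 3)));
  ((Posz 14), (ZMal (Mu (V 5) (V 0)) (Mu (V 4) (V 2)) (V 1) (V 4)));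
  ((Negz 4), (ZMal (Mu (V 4) (V 0)) (Mu (V 5) (V 2)) (V 1) (V 4)));
  ((Negz 8), (ZMal (Mu (V 4) (V 0)) (Mu (V 4) (V 2)) (V 1) (V 5)));
  ((Negz 3), (ZMal (Mu (V 3) (Mu (V 5) (V 0))) (V 2) (V 1) (V 5)));
  ((Posz 14), (ZMal (Mu (V 5) (Mu (V 3) (V 0))) (V 2) (V 1) (V 5)));
  ((Negz 9), (ZMal (Mu (V 5) (Mu (V 5) (V 0))) (V 2) (V 1) (V 3)));
  ((Posz 10), (ZMal (Mu (V 4) (Mu (V 5) (V 0))) (V 2) (V 1) (V 4)));
  ((Negz 9), (ZMal (Mu (V 4) (Mu (V 4) (V 0))) (V 2) (V 1) (V 5)));
  ((Negz 9), (ZMal (V 0) (V 3) (Mu (V 5) (Mu (V 1) (V 2))) (V 5)));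
  ((Negz 13), (ZMal (V 0) (V 3) (Mu (V 1) (Mu (V 5) (V 2))) (V 5)));
  ((Posz 6), (ZMal (V 0) (V 3) (Mu (V 2) (Mu (V 5) (V 1))) (V 5)));
  ((Posz 10), (ZMal (V 0) (V 4) (Mu (V 4) (Mu (V 1) (V 2))) (V 5)));
  ((Posz 14), (ZMal (V 0) (V 4) (Mu (V 1) (Mu (V 4) (V 2))) (V 5)));
  ((Negz 5), (ZMal (V 0) (V 4) (Mu (V 2) (Mu (V 4) (V 1))) (V 5)));
  ((Negz 9), (ZMal (Mu (V 3) (V 0)) (V 5) (Mu (V 1) (V 2)) (V 5)));
  ((Posz 5), (ZMal (Mu (V 5) (V 0)) (V 3) (Mu (V 1) (V 2)) (V 5)));
  ((Negz 9), (ZMal (Mu (V 5) (V 0)) (V 4) (Mu (V 1) (V 2)) (V 4)));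
  ((Posz 5), (ZMal (Mu (V 4) (V 0)) (V 4) (Mu (V 1) (V 2)) (V 5)));
  ((Posz 10), (ZMal (Mu (V 4) (V 0)) (V 5) (Mu (V 1) (V 2)) (V 4)));
  ((Posz 14), (ZMal (Mu (V 3) (V 0)) (V 5) (V 1) (Mu (V 5) (V 2))));
  ((Negz 13), (ZMal (Mu (V 5) (V 0)) (V 3) (V 1) (Mu (V 5) (V 2))));
  ((Posz 14), (ZMal (Mu (V 5) (V 0)) (V 4) (V 1) (Mu (V 4) (V 2))));
  ((Negz 13), (ZMal (Mu (V 4) (V 0)) (V 5) (V 1) (Mu (V 4) (V 2))));
  ((Posz 6), (ZMal (Mu (V 3) (V 0)) (V 5) (Mu (V 5) (V 1)) (V 2)));
  ((Negz 5), (ZMal (Mu (V 5) (V 0)) (V 3) (Mu (V 5) (V 1)) (V 2)));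
  ((Posz 6), (ZMal (Mu (V 5) (V 0)) (V 4) (Mu (V 4) (V 1)) (V 2)));
  ((Negz 5), (ZMal (Mu (V 4) (V 0)) (V 5) (Mu (V 4) (V 1)) (V 2)));
  ((Negz 4), (ZMal (Mu (V 3) (Mu (V 5) (V 0))) (V 5) (V 1) (V 2)));
  ((Posz 10), (ZMal (Mu (V 5) (Mu (V 3) (V 0))) (V 5) (V 1) (V 2)));
  ((Negz 4), (ZMal (Mu (V 5) (Mu (V 5) (V 0))) (V 3) (V 1) (V 2)));
  ((Negz 4), (ZMal (Mu (V 5) (Mu (V 4) (V 0))) (V 4) (V 1) (V 2)));
  ((Posz 10), (ZMal (Mu (V 4) (Mu (V 5) (V 0))) (V 4) (V 1) (V 2)));
  ((Negz 4), (ZMal (Mu (V 4) (Mu (V 4) (V 0))) (V 5) (V 1) (V 2)));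
  ((Posz 6), (ZMal (Mu (V 5) (Mu (V 0) (V 2))) (V 3) (V 5) (V 1)));
  ((Negz 5), (ZMal (Mu (V 4) (Mu (V 0) (V 2))) (V 4) (V 5) (V 1)));
  ((Negz 9), (ZMal (Mu (V 0) (Mu (V 5) (V 2))) (V 3) (V 5) (V 1)));
  ((Posz 10), (ZMal (Mu (V 0) (Mu (V 4) (V 2))) (V 4) (V 5) (V 1)));
  ((Negz 14), (ZMal (Mu (V 2) (Mu (V 5) (V 0))) (V 3) (V 5) (V 1)));
  ((Posz 15), (ZMal (Mu (V 2) (Mu (V 4) (V 0))) (V 4) (V 5) (V 1)));
  ((Posz 6), (ZMal (V 0) (V 2) (V 4) (Mu (V 5) (Mu (V 4) (V 1)))));
  ((Negz 5), (ZMal (V 0) (V 2) (V 4) (Mu (V 4) (Mu (V 5) (V 1)))));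
  ((Posz 6), (ZMal (V 0) (V 2) (V 5) (Mu (V 3) (Mu (V 5) (V 1)))));
  ((Negz 5), (ZMal (V 0) (V 2) (V 5) (Mu (V 5) (Mu (V 3) (V 1)))));
  ((Negz 9), (ZMal (V 0) (Mu (V 3) (V 2)) (V 5) (Mu (V 5) (V 1))));
  ((Posz 10), (ZMal (V 0) (Mu (V 5) (V 2)) (V 3) (Mu (V 5) (V 1))));
  ((Negz 9), (ZMal (V 0) (Mu (V 5) (V 2)) (V 4) (Mu (V 4) (V 1))));
  ((Posz 10), (ZMal (V 0) (Mu (V 4) (V 2)) (V 5) (Mu (V 4) (V 1))));
  ((Negz 4), (ZMal (Mu (V 5) (V 0)) (V 2) (V 3) (Mu (V 5) (V 1))));
  ((Posz 5), (ZMal (Mu (V 5) (V 0)) (V 2) (V 5) (Mu (V 3) (V 1))));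
  ((Posz 5), (ZMal (Mu (V 4) (V 0)) (V 2) (V 4) (Mu (V 5) (V 1))));
  ((Negz 4), (ZMal (Mu (V 4) (V 0)) (V 2) (V 5) (Mu (V 4) (V 1))));
  ((Negz 18), (ZMal (Mu (V 3) (Mu (V 5) (V 0))) (V 2) (V 5) (V 1)));
  ((Posz 24), (ZMal (Mu (V 5) (Mu (V 3) (V 0))) (V 2) (V 5) (V 1)));
  ((Negz 4), (ZMal (Mu (V 5) (Mu (V 5) (V 0))) (V 2) (V 3) (V 1)));
  ((Negz 18), (ZMal (Mu (V 5) (Mu (V 4) (V 0))) (V 2) (V 4) (V 1)));
  ((Posz 24), (ZMal (Mu (V 4) (Mu (V 5) (V 0))) (V 2) (V 4) (V 1)));
  ((Negz 4), (ZMal (Mu (V 4) (Mu (V 4) (V 0))) (V 2) (V 5) (V 1)));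
  ((Negz 9), (ZMal (V 0) (V 3) (V 5) (Mu (V 5) (Mu (V 1) (V 2)))));
  ((Negz 13), (ZMal (V 0) (V 3) (V 5) (Mu (V 1) (Mu (V 5) (V 2)))));
  ((Posz 6), (ZMal (V 0) (V 3) (V 5) (Mu (V 2) (Mu (V 5) (V 1)))));
  ((Posz 10), (ZMal (V 0) (V 4) (V 5) (Mu (V 4) (Mu (V 1) (V 2)))));
  ((Posz 14), (ZMal (V 0) (V 4) (V 5) (Mu (V 1) (Mu (V 4) (V 2)))));
  ((Negz 5), (ZMal (V 0) (V 4) (V 5) (Mu (V 2) (Mu (V 4) (V 1)))));
  ((Negz 4), (ZMal (Mu (V 5) (V 0)) (V 3) (V 5) (Mu (V 1) (V 2))));
  ((Posz 5), (ZMal (Mu (V 4) (V 0)) (V 4) (V 5) (Mu (V 1) (V 2))));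
  ((Negz 23), (ZR (ZN 0 3 5) (Mu (V 1) (Mu (V 5) (V 2)))));
  ((Negz 3), (ZR (ZN 0 3 5) (Mu (V 2) (Mu (V 5) (V 1)))));
  ((Negz 3), (ZR (ZN 0 4 5) (Mu (V 4) (Mu (V 1) (V 2)))));
  ((Posz 24), (ZR (ZN 0 4 5) (Mu (V 1) (Mu (V 4) (V 2)))));
  ((Posz 4), (ZR (ZMal (V 0) (V 4) (V 4) (V 5)) (Mu (V 1) (V 2))));
  ((Posz 14), (ZR (ZMal (V 0) (V 4) (V 5) (V 4)) (Mu (V 1) (V 2))));
  ((Posz 10), (ZR (ZMal (V 0) (V 5) (V 3) (V 5)) (Mu (V 1) (V 2))));
  ((Negz 3), (ZR (ZN 1 3 5) (Mu (V 0) (Mu (V 5) (V 2)))));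
  ((Negz 15), (ZR (ZN 1 3 5) (Mu (V 2) (Mu (V 5) (V 0)))));
  ((Posz 4), (ZR (ZN 1 4 5) (Mu (V 0) (Mu (V 4) (V 2)))));
  ((Posz 16), (ZR (ZN 1 4 5) (Mu (V 2) (Mu (V 4) (V 0)))));
  ((Negz 5), (ZR (ZMal (V 1) (V 4) (V 5) (V 4)) (Mu (V 0) (V 2))));
  ((Negz 5), (ZR (ZMal (V 1) (V 5) (V 3) (V 5)) (Mu (V 0) (V 2))));
  ((Negz 19), (ZR (ZN 2 3 5) (Mu (V 1) (Mu (V 5) (V 0)))));
  ((Posz 20), (ZR (ZN 2 4 5) (Mu (V 1) (Mu (V 4) (V 0)))));
  ((Negz 9), (ZR (ZMal (V 2) (V 4) (V 5) (V 4)) (Mu (V 0) (V 1))));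
  ((Negz 9), (ZR (ZMal (V 2) (V 5) (V 3) (V 5)) (Mu (V 0) (V 1))));
  ((Posz 14), (ZR (ZMal (V 0) (V 1) (V 3) (V 5)) (Mu (V 5) (V 2))));
  ((Negz 13), (ZR (ZMal (V 0) (V 1) (V 4) (V 5)) (Mu (V 4) (V 2))));
  ((Posz 10), (ZR (ZMal (V 0) (V 1) (V 5) (V 3)) (Mu (V 5) (V 2))));
  ((Negz 9), (ZR (ZMal (V 0) (V 1) (V 5) (V 4)) (Mu (V 4) (V 2))));
  ((Posz 24), (ZR (ZMal (V 0) (V 3) (V 1) (V 5)) (Mu (V 5) (V 2))));
  ((Negz 9), (ZR (ZMal (V 0) (V 4) (V 1) (V 4)) (Mu (V 5) (V 2))));
  ((Negz 13), (ZR (ZMal (V 0) (V 4) (V 1) (V 5)) (Mu (V 4) (V 2))));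
  ((Posz 10), (ZR (ZMal (V 0) (V 5) (V 1) (V 3)) (Mu (V 5) (V 2))));
  ((Negz 9), (ZR (ZMal (V 0) (V 5) (V 1) (V 5)) (Mu (V 3) (V 2))));
  ((Posz 24), (ZR (ZMal (V 0) (V 3) (V 5) (V 1)) (Mu (V 5) (V 2))));
  ((Negz 23), (ZR (ZMal (V 0) (V 4) (V 5) (V 1)) (Mu (V 4) (V 2))));
  ((Posz 4), (ZR (ZR (ZN 0 3 5) (V 1)) (Mu (V 5) (V 2))));
  ((Negz 3), (ZR (ZR (ZN 1 3 5) (V 0)) (Mu (V 5) (V 2))));
  ((Posz 4), (ZR (ZR (ZN 1 4 5) (V 0)) (Mu (V 4) (V 2))));
  ((Negz 3), (ZR (ZMal (V 0) (Mu (V 5) (V 1)) (V 3) (V 5)) (V 2)));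
  ((Posz 4), (ZR (ZMal (V 0) (Mu (V 4) (V 1)) (V 4) (V 5)) (V 2)));
  ((Negz 3), (ZR (ZMal (V 0) (V 3) (Mu (V 5) (V 1)) (V 5)) (V 2)));
  ((Posz 4), (ZR (ZMal (V 0) (V 4) (Mu (V 4) (V 1)) (V 5)) (V 2)));
  ((Negz 9), (ZR (ZMal (Mu (V 3) (V 0)) (V 5) (V 1) (V 5)) (V 2)));
  ((Posz 20), (ZR (ZMal (Mu (V 5) (V 0)) (V 3) (V 1) (V 5)) (V 2)));
  ((Negz 9), (ZR (ZMal (Mu (V 5) (V 0)) (V 4) (V 1) (V 4)) (V 2)));
  ((Negz 9), (ZR (ZMal (Mu (V 5) (V 0)) (V 5) (V 1) (V 3)) (V 2)));
  ((Negz 9), (ZR (ZMal (Mu (V 4) (V 0)) (V 4) (V 1) (V 5)) (V 2)));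
  ((Posz 20), (ZR (ZMal (Mu (V 4) (V 0)) (V 5) (V 1) (V 4)) (V 2)));
  ((Negz 3), (ZR (ZMal (V 0) (V 3) (V 5) (Mu (V 5) (V 1))) (V 2)));
  ((Posz 4), (ZR (ZMal (V 0) (V 4) (V 5) (Mu (V 4) (V 1))) (V 2)));
  ((Negz 19), (ZR (ZR (ZN 0 3 5) (Mu (V 5) (V 1))) (V 2)));
  ((Posz 24), (ZR (ZR (ZN 0 4 5) (Mu (V 4) (V 1))) (V 2)));
  ((Posz 24), (ZR (ZR (ZMal (V 0) (V 3) (V 5) (V 5)) (V 1)) (V 2)));
  ((Negz 23), (ZR (ZR (ZMal (V 0) (V 4) (V 4) (V 5)) (V 1)) (V 2)));
  ((Negz 3), (ZR (ZR (ZMal (V 0) (V 4) (V 5) (V 4)) (V 1)) (V 2)));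
  ((Posz 20), (ZR (ZR (ZMal (V 0) (V 5) (V 3) (V 5)) (V 1)) (V 2)));
  ((Negz 3), (ZR (ZR (ZN 1 3 5) (Mu (V 5) (V 0))) (V 2)));
  ((Posz 4), (ZR (ZR (ZN 1 4 5) (Mu (V 4) (V 0))) (V 2)));
  ((Posz 24), (ZR (ZR (ZR (ZN 0 3 5) (V 1)) (V 5)) (V 2)));
  ((Negz 19), (ZR (ZR (ZR (ZN 0 4 5) (V 1)) (V 4)) (V 2)));
  ((Negz 5), (ZR (ZMal (V 0) (V 2) (V 3) (V 5)) (Mu (V 5) (V 1))));
  ((Posz 6), (ZR (ZMal (V 0) (V 2) (V 4) (V 5)) (Mu (V 4) (V 1))));
  ((Posz 6), (ZR (ZMal (V 0) (V 2) (V 5) (V 3)) (Mu (V 5) (V 1))));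
  ((Negz 5), (ZR (ZMal (V 0) (V 2) (V 5) (V 4)) (Mu (V 4) (V 1))));
  ((Negz 9), (ZR (ZMal (V 0) (V 4) (V 2) (V 4)) (Mu (V 5) (V 1))));
  ((Posz 10), (ZR (ZMal (V 0) (V 4) (V 2) (V 5)) (Mu (V 4) (V 1))));
  ((Posz 10), (ZR (ZMal (V 0) (V 5) (V 2) (V 3)) (Mu (V 5) (V 1))));
  ((Negz 9), (ZR (ZMal (V 0) (V 5) (V 2) (V 5)) (Mu (V 3) (V 1))));
  ((Posz 20), (ZR (ZR (ZN 0 3 5) (V 2)) (Mu (V 5) (V 1))));
  ((Negz 19), (ZR (ZR (ZN 0 4 5) (V 2)) (Mu (V 4) (V 1))));
  ((Posz 4), (ZR (ZR (ZN 2 3 5) (V 0)) (Mu (V 5) (V 1))));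
  ((Negz 3), (ZR (ZR (ZN 2 4 5) (V 0)) (Mu (V 4) (V 1))));
  ((Posz 14), (ZR (ZMal (Mu (V 3) (V 0)) (V 5) (V 2) (V 5)) (V 1)));
  ((Negz 13), (ZR (ZMal (Mu (V 5) (V 0)) (V 3) (V 2) (V 5)) (V 1)));
  ((Posz 14), (ZR (ZMal (Mu (V 5) (V 0)) (V 4) (V 2) (V 4)) (V 1)));
  ((Negz 13), (ZR (ZMal (Mu (V 4) (V 0)) (V 5) (V 2) (V 4)) (V 1)));
  ((Posz 24), (ZR (ZR (ZN 0 3 5) (Mu (V 5) (V 2))) (V 1)));
  ((Negz 27), (ZR (ZR (ZN 0 4 5) (Mu (V 4) (V 2))) (V 1)));
  ((Posz 4), (ZR (ZR (ZMal (V 0) (V 4) (V 4) (V 5)) (V 2)) (V 1)));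
  ((Negz 3), (ZR (ZR (ZMal (V 0) (V 5) (V 3) (V 5)) (V 2)) (V 1)));
  ((Posz 24), (ZR (ZR (ZN 2 3 5) (Mu (V 5) (V 0))) (V 1)));
  ((Negz 23), (ZR (ZR (ZN 2 4 5) (Mu (V 4) (V 0))) (V 1)));
  ((Posz 10), (ZR (ZMal (V 1) (V 2) (V 3) (V 5)) (Mu (V 5) (V 0))));
  ((Negz 9), (ZR (ZMal (V 1) (V 2) (V 4) (V 5)) (Mu (V 4) (V 0))));
  ((Negz 9), (ZR (ZMal (V 1) (V 2) (V 5) (V 3)) (Mu (V 5) (V 0))));
  ((Posz 10), (ZR (ZMal (V 1) (V 2) (V 5) (V 4)) (Mu (V 4) (V 0))));
  ((Negz 15), (ZR (ZR (ZN 1 3 5) (V 2)) (Mu (V 5) (V 0))));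
  ((Posz 16), (ZR (ZR (ZN 1 4 5) (V 2)) (Mu (V 4) (V 0))));
  ((Posz 4), (ZR (ZR (ZN 1 3 5) (Mu (V 5) (V 2))) (V 0)));
  ((Negz 3), (ZR (ZR (ZN 1 4 5) (Mu (V 4) (V 2))) (V 0)))].

Definition jtgt (a : tm) : poly :=
  [:: (Negz 7, Mu (Mu (Mu (V 0) (V 1)) (V 2)) a);
      (Negz 7, Mu (Mu (Mu (V 1) (V 2)) (V 0)) a);
      (Negz 7, Mu (Mu (Mu (V 2) (V 0)) (V 1)) a)].
Lemma chkE : check certE (jtgt (V 3)). Proof. vm_compute. reflexivity. Qed.
Lemma chkH : check certH (jtgt (V 4)). Proof. vm_compute. reflexivity. Qed.
Lemma chkG : check certG (jtgt (V 5)). Proof. vm_compute. reflexivity. Qed.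

Lemma two_neq0 (F : fieldType) : 2 \notin [pchar F] -> (2%:R : F) != 0.
Proof.
move=> h2; apply/negP => H; apply/negP: h2; rewrite negbK.
by rewrite inE /= H.
Qed.

Lemma scale_eq0_inv (F : fieldType) (M : lmodType F) (a : F) (v : M) :
  a != 0 -> a *: v = 0 -> v = 0.
Proof. by move=> Ha /eqP; rewrite scaler_eq0 (negbTE Ha) /= => /eqP. Qed.

Lemma evp_jtgt (F : fieldType) (M : lmodType F) (mul : M -> M -> M) env :
  bilinear_prod mul -> forall t,
  evp mul env (jtgt t) = mul (jacobian mul (env 0) (env 1) (env 2)) (ev mul env t) *~ Negz 7.
Proof.
move=> hb t; rewrite /evp !big_cons big_nil /= addr0 /jacobian !(mulDl hb) !mulrzDl.
by rewrite addrA.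
Qed.

Theorem mainTheorem3 (F : fieldType) (M : lmodType F) (mul : M -> M -> M)
    (e h f : M) :
  2 \notin [pchar F] -> 3 \notin [pchar F] ->
  in_variety_H mul ->
  sl2_triple mul e h f ->
  (forall m : M, m != 0 -> exists a : M, in_span3 e h f a /\ mul m a != 0) ->
  forall x y z : M, N_M mul e h f x -> N_M mul e h f y -> N_M mul e h f z ->
    jacobian mul x y z = 0.
Proof.
move=> h2 h3 [[hb ha hm] _] [_ Heh Hfh Hef] hnd x y z Nx Ny Nz.
have t2 := two_neq0 h2.
pose g := 2%:R *: f.
pose env := fun n => nth 0 [:: x; y; z; e; h; g] n.
have anti := mulC_anti hb ha.
have Hgh : mul g h = - g by rewrite /g (mulZl hb) Hfh scalerN.
have Heg : mul e g = h by rewrite /g (mulZr hb) Hef scalerA mulfV // scale1r.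
have ht : tblH mul env.
  move=> i j; rewrite /isL.
  case: i => [|[|[|[|[|[|i]]]]]] //; case: j => [|[|[|[|[|[|j]]]]]] // _ _ /=;
    rewrite ?ha ?mulr1z ?mulrN1z //.
  - by rewrite anti Heh.
  - by rewrite anti Hgh opprK.
  - by rewrite anti Heg.
have spanL : forall j, isL j -> in_span3 e h f (env j).
  move=> j; rewrite /isL; case: j => [|[|[|[|[|[|j]]]]]] // _ /=.
  - by exists 1, 0, 0; rewrite scale1r !scale0r !addr0.
  - by exists 0, 1, 0; rewrite scale1r !scale0r add0r addr0.
  - by exists 0, 0, 2%:R; rewrite !scale0r !add0r.
have hn : NH mul env.
  move=> i j k; case: i => [|[|[|i]]] // _ Hj Hk /=.
  - exact: Nx (spanL _ Hj) (spanL _ Hk).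
  - exact: Ny (spanL _ Hj) (spanL _ Hk).
  - exact: Nz (spanL _ Hj) (spanL _ Hk).
have t8 : ((Negz 7)%:~R : F) != 0.
  have -> : ((Negz 7)%:~R : F) = - (2%:R ^+ 3) by rewrite NegzE -natrX.
  by rewrite oppr_eq0 expf_neq0.
have key : forall t, evp mul env (jtgt t) = 0 -> mul (jacobian mul x y z) (ev mul env t) = 0.
  move=> t; rewrite (evp_jtgt env hb) /= -scaler_int; exact: scale_eq0_inv.
have J3 := key (V 3) (check_ok hb ha hm ht hn chkE).
have J4 := key (V 4) (check_ok hb ha hm ht hn chkH).
have J5 := key (V 5) (check_ok hb ha hm ht hn chkG).
rewrite /= in J3 J4 J5.
have J5' : mul (jacobian mul x y z) f = 0.
  by apply: (scale_eq0_inv t2); rewrite -(mulZr hb).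
apply/eqP; apply/negPn/negP => HJ.
case: (hnd _ HJ) => a [[al [be [ga ->]]]].
by rewrite !(mulDr hb) !(mulZr hb) J3 J4 J5' !scaler0 !addr0 eqxx.
Qed.
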